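(* Let $d\ge3$. There is a constant $c_3>0$ such that for all $\lambda>0$ and all $p\in\mathbf{T}^d$, $$\operatorname{Im}\omega(p)\le -c_3\lambda^2[D(p)]^{d-2},$$ where $D(p)=\min\{|p-v|: v=0\ \text{or}\ v=(\pm\frac12,\dots,\pm\frac12)\}$ is the distance from $p$ to the set consisting of the origin and the vertices of $\mathbf{T}^d$.
   Context: $\mathbf{T}^d=[-\frac12,\frac12]^d$, $e(p)=\sum_{j=1}^d(1-\cos(2\pi p^{(j)}))$, $\Theta(\alpha)=\lim_{\varepsilon\to0+}\int_{\mathbf{T}^d}\frac{{\rm d}q}{\alpha-e(q)+i\varepsilon}$, $\theta(p)=\Theta(e(p))$, and $\omega(p)=e(p)+\lambda^2\theta(p)$. *)

(* Defs.v *)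
From Stdlib Require Import Reals List.
From Coquelicot Require Import Coquelicot.
Import ListNotations.
Open Scope R_scope.

(* Points of R^d are encoded as functions nat -> R; only coordinates 0..d-1 matter. *)

Fixpoint edisp (d : nat) (p : nat -> R) : R :=
  match d with
  | O => 0
  | S k => edisp k p + (1 - cos (2 * PI * p k))
  end.

Definition in_torus (d : nat) (p : nat -> R) : Prop :=
  forall j, (j < d)%nat -> -/2 <= p j <= /2.

(* Iterated Riemann integral over [-1/2,1/2]^d (coordinates 0..d-1);
   for continuous integrands this is the Lebesgue integral over T^d. *)
Fixpoint iint (d : nat) (f : (nat -> R) -> R) : R :=
  match d with
  | O => f (fun _ => 0)
  | S k => RInt (fun x => iint k (fun q => f (fun i => if Nat.eqb i k then x else q i)))
                (-/2) (/2)
  end.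

Definition cint (d : nat) (f : (nat -> R) -> C) : C :=
  (iint d (fun q => Re (f q)), iint d (fun q => Im (f q))).

Definition Theta_eps (d : nat) (alpha eps : R) : C :=
  cint d (fun q => Cinv ((alpha - edisp d q, eps) : C)).

Definition is_Theta (d : nat) (alpha : R) (z : C) : Prop :=
  filterlim (fun eps => Theta_eps d alpha eps) (at_right 0) (locally z).

Definition is_omega (d : nat) (lam : R) (p : nat -> R) (w : C) : Prop :=
  exists th : C, is_Theta d (edisp d p) th /\
    w = Cplus (RtoC (edisp d p)) (Cmult (RtoC (lam ^ 2)) th).

Fixpoint sqdist (d : nat) (p v : nat -> R) : R :=
  match d with
  | O => 0
  | S k => sqdist k p v + (p k - v k) ^ 2
  end.
Definition dist (d : nat) (p v : nat -> R) : R := sqrt (sqdist d p v).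

Fixpoint blists (n : nat) : list (list bool) :=
  match n with
  | O => [nil]
  | S k => flat_map (fun l => [true :: l; false :: l]) (blists k)
  end.

Definition vertex (b : list bool) : nat -> R :=
  fun j => if nth j b false then /2 else -/2.

Definition Ddist (d : nat) (p : nat -> R) : R :=
  fold_right Rmin (dist d p (fun _ => 0))
             (map (fun b => dist d p (vertex b)) (blists d)).

(* Main.v *)
Require Import Defs.
From Stdlib Require Import Reals.
From Coquelicot Require Import Coquelicot.
From Stdlib Require Import Lra Lia FunctionalExtensionality List.
Open Scope R_scope.
Import ListNotations.

Definition g (x : R) : R := 1 - cos (2 * PI * x).
Definition upd (q : nat -> R) (k : nat) (x : R) : nat -> R :=
  fun i => if Nat.eqb i k then x else q i.

Lemma edisp_upd_ge : forall k j q x, (k <= j)%nat -> edisp k (upd q j x) = edisp k q.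
Proof.
  induction k as [|k IH]; intros j q x Hj; simpl; auto.
  rewrite IH by lia. unfold upd.
  replace (Nat.eqb k j) with false; auto.
  symmetry; apply Nat.eqb_neq; lia.
Qed.

Lemma edisp_S_upd : forall k q x, edisp (S k) (upd q k x) = edisp k q + g x.
Proof.
  intros. simpl. rewrite edisp_upd_ge by lia. unfold upd, g.
  rewrite Nat.eqb_refl. ring.
Qed.

Lemma g_range : forall x, 0 <= g x <= 2.
Proof. intros; unfold g; pose proof (COS_bound (2*PI*x)); lra. Qed.

Lemma edisp_range : forall k q, 0 <= edisp k q <= 2 * INR k.
Proof.
  induction k as [|k IH]; intros q; simpl.
  - lra.
  - pose proof (IH q). pose proof (COS_bound (2*PI*q k)).
    destruct k; simpl in *; lra.
Qed.

Lemma lip_cont (f : R -> R) L :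
  (forall a b, Rabs (f a - f b) <= L * Rabs (a - b)) -> forall x, continuous f x.
Proof.
  intros Hf x. apply continuity_pt_filterlim.
  intros eps Heps.
  exists (eps / (Rabs L + 1)). split.
  - apply Rdiv_lt_0_compat; auto. pose proof (Rabs_pos L); lra.
  - intros y [_ Hy]. simpl in *. unfold R_dist in *.
    eapply Rle_lt_trans. apply Hf.
    pose proof (Rabs_pos L). pose proof (Rabs_pos (y - x)).
    apply Rle_lt_trans with (Rabs L * Rabs (y - x)).
    + apply Rmult_le_compat_r; auto. apply Rle_abs.
    + apply Rle_lt_trans with ((Rabs L + 1) * Rabs (y - x)). nra.
      replace eps with ((Rabs L + 1) * (eps / (Rabs L + 1))) by (field; lra).
      apply Rmult_lt_compat_l; lra.
Qed.

Lemma lip_of_deriv (f df : R -> R) L :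
  (forall x, is_derive f x (df x)) -> (forall x, Rabs (df x) <= L) ->
  forall a b, Rabs (f a - f b) <= L * Rabs (a - b).
Proof.
  intros Hd Hb a b.
  destruct (MVT_gen f b a df) as [c [Hc Heq]].
  - intros; apply Hd.
  - intros x _. apply continuity_pt_filterlim. apply (ex_derive_continuous (K:=R_AbsRing) (V:=R_NormedModule) f).
    eexists; apply Hd.
  - rewrite Heq, Rabs_mult. apply Rmult_le_compat_r. apply Rabs_pos. apply Hb.
Qed.

Lemma sin_lip : forall a b, Rabs (sin a - sin b) <= Rabs (a - b).
Proof.
  intros. rewrite <- (Rmult_1_l (Rabs (a - b))).
  apply lip_of_deriv with (df := cos).
  - intros x. apply is_derive_sin_unfolded || (auto_derive; auto; ring).
  - intros x. pose proof (COS_bound x). apply Rabs_le; lra.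
Qed.

Lemma cos_lip : forall a b, Rabs (cos a - cos b) <= Rabs (a - b).
Proof.
  intros. rewrite <- (Rmult_1_l (Rabs (a - b))).
  apply lip_of_deriv with (df := fun x => - sin x).
  - intros x. auto_derive; auto; ring.
  - intros x. pose proof (SIN_bound x). apply Rabs_le; lra.
Qed.

Lemma PI_pos' : 0 < PI. Proof. exact PI_RGT_0. Qed.

Lemma g_lip : forall a b, Rabs (g a - g b) <= 2 * PI * Rabs (a - b).
Proof.
  intros. unfold g.
  replace (1 - cos (2 * PI * a) - (1 - cos (2 * PI * b))) with
    (- (cos (2 * PI * a) - cos (2 * PI * b))) by ring.
  rewrite Rabs_Ropp. eapply Rle_trans. apply cos_lip.
  replace (2 * PI * a - 2 * PI * b) with ((2 * PI) * (a - b)) by ring.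
  rewrite Rabs_mult. rewrite (Rabs_right (2*PI)). lra. pose proof PI_pos'; lra.
Qed.

Lemma g_cont : forall x, continuous g x.
Proof. apply lip_cont with (2*PI). apply g_lip. Qed.

Ltac rg := match goal with |- ?a = ?b => change (@eq R a b) end; ring.
Ltac rl := match goal with |- ?a = ?b => change (@eq R a b) end; lra.

Definition LLip (H : R -> R -> R) : Prop :=
  forall r, 0 <= r -> exists L, 0 <= L /\
    forall y y' e e', Rabs y <= r -> Rabs y' <= r -> Rabs e <= r -> Rabs e' <= r ->
      Rabs (H y e - H y' e') <= L * (Rabs (y - y') + Rabs (e - e')).

Definition Fk (k : nat) (H : R -> R -> R) (y c : R) : R :=
  iint k (fun q => H y (edisp k q + c)).

Lemma Fk_0 : forall H y c, Fk 0 H y c = H y (0 + c).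
Proof. reflexivity. Qed.

Lemma Fk_S : forall k H y c,
  Fk (S k) H y c = RInt (fun x => Fk k H y (g x + c)) (-/2) (/2).
Proof.
  intros. unfold Fk. simpl iint. apply RInt_ext. intros x _.
  f_equal. apply functional_extensionality. intros q.
  change (H y (edisp (S k) (upd q k x) + c) = H y (edisp k q + (g x + c))).
  rewrite edisp_S_upd. f_equal. ring.
Qed.

Lemma LLip_slice : forall F, LLip F -> forall y c,
  exists L, forall a b, Rabs (F y (g a + c) - F y (g b + c)) <= L * Rabs (a - b).
Proof.
  intros F HF y c.
  destruct (HF (Rabs y + Rabs c + 2)) as [L [HL HLip]].
  { pose proof (Rabs_pos y); pose proof (Rabs_pos c); lra. }
  exists (L * (2 * PI)). intros a b.
  assert (Hr : forall z, Rabs (g z + c) <= Rabs y + Rabs c + 2).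
  { intros z. pose proof (g_range z). pose proof (Rabs_pos y).
    eapply Rle_trans. apply Rabs_triang. rewrite (Rabs_right (g z)) by lra. lra. }
  eapply Rle_trans. apply HLip; auto.
  1,2: pose proof (Rabs_pos y); pose proof (Rabs_pos c); lra.
  replace (y - y) with 0 by ring. rewrite Rabs_R0, Rplus_0_l.
  replace (g a + c - (g b + c)) with (g a - g b) by ring.
  rewrite Rmult_assoc. apply Rmult_le_compat_l; auto. apply g_lip.
Qed.

Lemma LLip_slice_ex : forall F, LLip F -> forall y c a b,
  ex_RInt (fun x => F y (g x + c)) a b.
Proof.
  intros F HF y c a b. destruct (LLip_slice F HF y c) as [L HL].
  apply (ex_RInt_continuous (V:=R_CompleteNormedModule)). intros z _. apply lip_cont with L. apply HL.
Qed.

Lemma RInt_lin : forall (f h : R -> R) a b al be, ex_RInt f a b -> ex_RInt h a b ->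
  RInt (fun x => al * f x + be * h x) a b = al * RInt f a b + be * RInt h a b.
Proof.
  intros f h a b al be Hf Hh.
  transitivity (RInt (fun x => plus (scal al (f x)) (scal be (h x))) a b). reflexivity.
  rewrite (RInt_plus (V:=R_CompleteNormedModule) (fun x => scal al (f x)) (fun x => scal be (h x))).
  rewrite !(RInt_scal (V:=R_CompleteNormedModule)); auto.
  - apply (ex_RInt_scal (V:=R_CompleteNormedModule)); auto.
  - apply (ex_RInt_scal (V:=R_CompleteNormedModule)); auto.
Qed.

Lemma ex_RInt_lin : forall (f h : R -> R) a b al be, ex_RInt f a b -> ex_RInt h a b ->
  ex_RInt (fun x => al * f x + be * h x) a b.
Proof.
  intros. apply (ex_RInt_plus (V:=R_CompleteNormedModule) (fun x => scal al (f x)) (fun x => scal be (h x))).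
  apply (ex_RInt_scal (V:=R_CompleteNormedModule)); auto.
  apply (ex_RInt_scal (V:=R_CompleteNormedModule)); auto.
Qed.

Lemma ex_RInt_sub : forall (f h : R -> R) a b, ex_RInt f a b -> ex_RInt h a b ->
  ex_RInt (fun x => f x - h x) a b.
Proof.
  intros. eapply ex_RInt_ext. 2: apply (ex_RInt_lin f h a b 1 (-1)); auto.
  intros; simpl; rg.
Qed.

Lemma RInt_sub : forall (f h : R -> R) a b, ex_RInt f a b -> ex_RInt h a b ->
  RInt (fun x => f x - h x) a b = RInt f a b - RInt h a b.
Proof.
  intros. rewrite (RInt_ext _ (fun x => 1 * f x + (-1) * h x)).
  rewrite RInt_lin; auto. rg. intros x _; rg.
Qed.

Lemma ex_RInt_abs : forall (f : R -> R) a b, ex_RInt f a b -> ex_RInt (fun x => Rabs (f x)) a b.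
Proof. intros. apply (ex_RInt_norm f a b H). Qed.

Lemma RInt_const' : forall m a b, RInt (fun _ => m) a b = (b - a) * m.
Proof. intros. rewrite RInt_const. reflexivity. Qed.

Lemma Fk_LLip : forall k H, LLip H -> LLip (Fk k H).
Proof.
  induction k as [|k IH]; intros H HH.
  - intros r Hr. destruct (HH r Hr) as [L [HL HLip]]. exists L; split; auto.
    intros. rewrite !Fk_0, !Rplus_0_l. apply HLip; auto.
  - intros r Hr. destruct (IH H HH (r + 2)) as [L [HL HLip]]. lra.
    exists L; split; auto. intros y y' e e' Hy Hy' He He'.
    rewrite !Fk_S. rewrite <- RInt_sub by (apply LLip_slice_ex; auto).
    assert (Hb : forall x, Rabs (Fk k H y (g x + e) - Fk k H y' (g x + e'))
                 <= L * (Rabs (y - y') + Rabs (e - e'))).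
    { intros x. pose proof (g_range x).
      replace (e - e') with ((g x + e) - (g x + e')) by ring.
      apply HLip; try lra;
      (eapply Rle_trans; [apply Rabs_triang| rewrite (Rabs_right (g x)) by lra; lra]). }
    eapply Rle_trans. apply abs_RInt_le. lra.
    apply ex_RInt_sub; apply LLip_slice_ex; auto.
    eapply Rle_trans. apply RInt_le with (g := fun _ => L * (Rabs (y - y') + Rabs (e - e'))).
    lra. apply ex_RInt_abs. apply ex_RInt_sub; apply LLip_slice_ex; auto.
    apply ex_RInt_const. intros x _. apply Hb.
    rewrite RInt_const'. lra.
Qed.

Lemma Fk_lin : forall k H1 H2 al be, LLip H1 -> LLip H2 -> forall y c,
  Fk k (fun y e => al * H1 y e + be * H2 y e) y c = al * Fk k H1 y c + be * Fk k H2 y c.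
Proof.
  induction k as [|k IH]; intros H1 H2 al be L1 L2 y c.
  - reflexivity.
  - rewrite !Fk_S. rewrite <- RInt_lin by (apply LLip_slice_ex; apply Fk_LLip; auto).
    apply RInt_ext. intros x _. apply IH; auto.
Qed.

Lemma Fk_le : forall k H1 H2, LLip H1 -> LLip H2 -> (forall y e, H1 y e <= H2 y e) ->
  forall y c, Fk k H1 y c <= Fk k H2 y c.
Proof.
  induction k as [|k IH]; intros H1 H2 L1 L2 Hle y c.
  - apply Hle.
  - rewrite !Fk_S. apply RInt_le. lra.
    1,2: apply LLip_slice_ex; apply Fk_LLip; auto.
    intros x _. apply IH; auto.
Qed.

Lemma Fk_const : forall k m y c, Fk k (fun _ _ => m) y c = m.
Proof.
  induction k as [|k IH]; intros. reflexivity.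
  rewrite Fk_S. rewrite (RInt_ext _ (fun _ => m)). rewrite RInt_const'. rl.
  intros; simpl; apply IH.
Qed.

Lemma LLip_const : forall m, LLip (fun _ _ => m).
Proof. intros m r Hr. exists 0. split. lra. intros. unfold Rminus. rewrite Rplus_opp_r, Rabs_R0. lra. Qed.

Lemma Fk_bound : forall k H M, LLip H -> (forall y e, Rabs (H y e) <= M) ->
  forall y c, Rabs (Fk k H y c) <= M.
Proof.
  intros k H M HL HM y c. apply Rabs_le. split.
  - rewrite <- (Fk_const k (-M) y c). apply Fk_le; auto. apply LLip_const.
    intros. pose proof (HM y0 e) as Hm. unfold Rabs in Hm. destruct Rcase_abs; lra.
  - rewrite <- (Fk_const k M y c). apply Fk_le; auto. apply LLip_const.
    intros. pose proof (HM y0 e). apply Rle_trans with (Rabs (H y0 e)). apply Rle_abs. auto.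
Qed.

Lemma Fk_ext_range : forall k H H' y c,
  (forall e, c <= e <= c + 2 * INR k -> H y e = H' y e) -> Fk k H y c = Fk k H' y c.
Proof.
  intros. unfold Fk. f_equal. apply functional_extensionality. intros q.
  apply H0. pose proof (edisp_range k q). lra.
Qed.

Lemma lip_cont_loc (f : R -> R) x0 L :
  (forall a, Rabs (a - x0) <= 1 -> Rabs (f a - f x0) <= L * Rabs (a - x0)) -> continuous f x0.
Proof.
  intros Hf. apply continuity_pt_filterlim.
  intros eps Heps.
  exists (Rmin 1 (eps / (Rabs L + 1))). split.
  - apply Rmin_pos. lra. apply Rdiv_lt_0_compat; auto. pose proof (Rabs_pos L); lra.
  - intros y [_ Hy]. simpl in *. unfold R_dist in *.
    assert (H1 : Rabs (y - x0) <= 1) by (pose proof (Rmin_l 1 (eps / (Rabs L + 1))); lra).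
    assert (H2 : Rabs (y - x0) < eps / (Rabs L + 1)) by (pose proof (Rmin_r 1 (eps / (Rabs L + 1))); lra).
    eapply Rle_lt_trans. apply Hf; auto.
    pose proof (Rabs_pos L). pose proof (Rabs_pos (y - x0)).
    apply Rle_lt_trans with (Rabs L * Rabs (y - x0)).
    + apply Rmult_le_compat_r; auto. apply Rle_abs.
    + apply Rle_lt_trans with ((Rabs L + 1) * Rabs (y - x0)). nra.
      replace eps with ((Rabs L + 1) * (eps / (Rabs L + 1))) by (field; lra).
      apply Rmult_lt_compat_l; lra.
Qed.

Lemma LLip_loc : forall K, LLip K -> forall x0 t0, exists L, 0 <= L /\
  forall x t x' t', Rabs (x - x0) <= 1 -> Rabs (t - t0) <= 1 ->
    Rabs (x' - x0) <= 1 -> Rabs (t' - t0) <= 1 ->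
    Rabs (K x t - K x' t') <= L * (Rabs (x - x') + Rabs (t - t')).
Proof.
  intros K HK x0 t0.
  destruct (HK (Rabs x0 + Rabs t0 + 1)) as [L [HL HLip]].
  pose proof (Rabs_pos x0); pose proof (Rabs_pos t0); lra.
  exists L; split; auto. intros x t x' t' H1 H2 H3 H4.
  apply HLip;
  match goal with |- Rabs ?z <= _ =>
    pose proof (Rabs_pos x0); pose proof (Rabs_pos t0);
    pose proof (Rabs_triang_inv z x0); pose proof (Rabs_triang_inv z t0); lra end.
Qed.

Lemma LLip_cont_t : forall K, LLip K -> forall x0 t0, continuous (fun t => K x0 t) t0.
Proof.
  intros K HK x0 t0. destruct (LLip_loc K HK x0 t0) as [L [HL Hl]].
  apply lip_cont_loc with L. intros a Ha.
  eapply Rle_trans. apply Hl; auto; rewrite Rminus_diag, Rabs_R0; lra.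
  rewrite Rminus_diag, Rabs_R0. lra.
Qed.

Lemma LLip_cont_x : forall K, LLip K -> forall x0 t0, continuous (fun x => K x t0) x0.
Proof.
  intros K HK x0 t0. destruct (LLip_loc K HK x0 t0) as [L [HL Hl]].
  apply lip_cont_loc with L. intros a Ha.
  eapply Rle_trans. apply Hl; auto; rewrite Rminus_diag, Rabs_R0; lra.
  rewrite Rminus_diag, Rabs_R0. lra.
Qed.

Lemma LLip_c2d : forall K, LLip K -> forall x0 t0, continuity_2d_pt K x0 t0.
Proof.
  intros K HK x0 t0 eps. destruct (LLip_loc K HK x0 t0) as [L [HL Hl]].
  assert (Hd : 0 < Rmin 1 (eps / (2 * L + 1))).
  { apply Rmin_pos. lra. apply Rdiv_lt_0_compat. apply cond_pos. lra. }
  exists (mkposreal _ Hd). simpl. intros u v Hu Hv.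
  pose proof (Rmin_l 1 (eps / (2 * L + 1))). pose proof (Rmin_r 1 (eps / (2 * L + 1))).
  eapply Rle_lt_trans. apply Hl; try lra; rewrite Rminus_diag, Rabs_R0; lra.
  apply Rle_lt_trans with (L * (2 * (eps / (2 * L + 1)))).
  apply Rmult_le_compat_l; auto. lra.
  pose proof (cond_pos eps).
  replace (L * (2 * (eps / (2 * L + 1)))) with (eps * (2 * L / (2 * L + 1))) by (field; lra).
  rewrite <- (Rmult_1_r eps) at 2. apply Rmult_lt_compat_l; auto.
  apply Rmult_lt_reg_r with (2 * L + 1). lra. field_simplify; lra.
Qed.

Lemma ex_RInt_cont : forall (f : R -> R) a b, (forall x, continuous f x) -> ex_RInt f a b.
Proof. intros. apply (ex_RInt_continuous (V:=R_CompleteNormedModule)). intros; auto. Qed.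

Lemma RInt_diff_bound : forall (f h : R -> R) a b M, ex_RInt f a b -> ex_RInt h a b ->
  (forall x, Rmin a b <= x <= Rmax a b -> Rabs (f x - h x) <= M) ->
  Rabs (RInt f a b - RInt h a b) <= Rabs (b - a) * M.
Proof.
  intros f h a b M Hf Hh Hb.
  assert (Hgen : forall a b, a <= b -> ex_RInt f a b -> ex_RInt h a b ->
     (forall x, a <= x <= b -> Rabs (f x - h x) <= M) ->
     Rabs (RInt f a b - RInt h a b) <= (b - a) * M).
  { clear. intros a b Hab Hf Hh Hb. rewrite <- RInt_sub by auto.
    eapply Rle_trans. apply abs_RInt_le. auto. apply ex_RInt_sub; auto.
    rewrite <- RInt_const'. apply RInt_le; auto. apply ex_RInt_abs, ex_RInt_sub; auto.
    apply ex_RInt_const. intros; apply Hb; lra. }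
  destruct (Rle_or_lt a b).
  - rewrite (Rabs_right (b - a)) by lra. apply Hgen; auto.
    intros; apply Hb. rewrite Rmin_left, Rmax_right; lra.
  - rewrite (Rabs_left (b - a)) by lra.
    assert (Hf' : ex_RInt f b a) by (apply ex_RInt_swap; auto).
    assert (Hh' : ex_RInt h b a) by (apply ex_RInt_swap; auto).
    rewrite <- (opp_RInt_swap f b a Hf'). rewrite <- (opp_RInt_swap h b a Hh').
    replace (opp (RInt f b a) - opp (RInt h b a)) with (- (RInt f b a - RInt h b a)) by (unfold opp; simpl; ring).
    rewrite Rabs_Ropp. replace (- (b - a)) with (a - b) by ring.
    apply Hgen; auto. lra.
    intros; apply Hb. rewrite Rmin_right, Rmax_left; lra.
Qed.

Lemma LLip_swap : forall K, LLip K -> LLip (fun t x => K x t).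
Proof.
  intros K HK r Hr. destruct (HK r Hr) as [L [HL Hl]]. exists L; split; auto.
  intros. rewrite Rplus_comm. apply Hl; auto.
Qed.

Lemma cont_int_x : forall K, LLip K -> forall c s x0,
  continuous (fun x => RInt (fun t => K x t) c s) x0.
Proof.
  intros K HK c s x0.
  destruct (HK (Rabs x0 + 1 + Rabs c + Rabs s)) as [L [HL Hl]].
  { pose proof (Rabs_pos x0); pose proof (Rabs_pos c); pose proof (Rabs_pos s); lra. }
  apply lip_cont_loc with (Rabs (s - c) * L). intros a Ha.
  rewrite Rmult_assoc. apply RInt_diff_bound.
  1,2: apply ex_RInt_cont; intros; apply LLip_cont_t; auto.
  intros t Ht.
  assert (Rabs t <= Rabs c + Rabs s).
  { apply Rabs_le. unfold Rmin, Rmax in Ht. destruct Rle_dec;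
    pose proof (Rabs_pos c); pose proof (Rabs_pos s);
    pose proof (Rle_abs c); pose proof (Rle_abs s); pose proof (Rle_abs (-c)); pose proof (Rle_abs (-s));
    rewrite Rabs_Ropp in *; lra. }
  pose proof (Rabs_pos x0); pose proof (Rabs_pos c); pose proof (Rabs_pos s).
  eapply Rle_trans. apply Hl; try lra.
  pose proof (Rabs_triang_inv a x0); lra.
  rewrite Rminus_diag, Rabs_R0, Rplus_0_r. lra.
Qed.

Lemma fubini2 : forall (K : R -> R -> R) a b c d, LLip K ->
  RInt (fun x => RInt (fun t => K x t) c d) a b = RInt (fun t => RInt (fun x => K x t) a b) c d.
Proof.
  intros K a b c d HK.
  pose (G := fun s => (RInt (fun x => K x s) a b : R)).
  pose (f := fun u x => (RInt (fun t => K x t) c u : R)).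
  pose (A := fun s => (RInt (fun x => f s x) a b : R)).
  pose (B := fun s => (RInt G c s : R)).
  assert (HG : forall s, continuous G s).
  { intros s. unfold G. apply (cont_int_x (fun t x => K x t)). apply LLip_swap; auto. }
  assert (Hf : forall x u, is_derive (fun u => f u x) u (K x u)).
  { intros x u. unfold f. apply (is_derive_RInt (fun t => K x t) (fun u => RInt (fun t => K x t) c u) c).
    apply filter_forall. intros b0. apply (RInt_correct (V:=R_CompleteNormedModule)). apply ex_RInt_cont.
    intros; apply LLip_cont_t; auto.
    apply LLip_cont_t; auto. }
  assert (HB : forall s, is_derive B s (G s)).
  { intros s. unfold B. apply (is_derive_RInt G (fun s => RInt G c s) c). apply filter_forall. intros b0.
    apply (RInt_correct (V:=R_CompleteNormedModule)). apply ex_RInt_cont; auto. auto. }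
  assert (HA : forall s, is_derive A s (G s)).
  { intros s. unfold A.
    assert (E : RInt (fun t => Derive (fun u => f u t) s) a b = G s).
    { unfold G. apply RInt_ext. intros x _. apply is_derive_unique. apply Hf. }
    rewrite <- E. apply (is_derive_RInt_param f a b s).
    - apply filter_forall. intros x0 t _. eexists; apply Hf.
    - intros t _. apply continuity_2d_pt_ext with (fun u v => K v u).
      intros; symmetry; apply is_derive_unique; apply Hf.
      apply LLip_c2d. apply LLip_swap; auto.
    - apply filter_forall. intros y. apply ex_RInt_cont. intros x. unfold f.
      apply cont_int_x; auto. }
  assert (HD : forall s, is_derive (fun s => A s - B s) s 0).
  { intros s. replace 0 with (G s - G s) by ring. apply (is_derive_minus A B); auto. }
  pose proof (lip_of_deriv (fun s => A s - B s) (fun _ => 0) 0 HD) as Hl.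
  assert (Hc : A c - B c = 0).
  { unfold A, B, f. rewrite (RInt_point c G).
    rewrite (RInt_ext _ (fun _ => 0)). rewrite RInt_const'. change (zero : R) with 0. ring.
    intros x _. rewrite (RInt_point c). reflexivity. }
  assert (H0 : forall x : R, Rabs ((fun _ : R => 0) x) <= 0) by (intros; simpl; rewrite Rabs_R0; lra).
  specialize (Hl H0 d c).
  rewrite Rmult_0_l, Hc, Rminus_0_r in Hl.
  assert (A d - B d = 0) by (pose proof (Rabs_pos (A d - B d)); apply Rabs_eq_0; lra).
  unfold A, B, f, G in H. lra.
Qed.

Lemma LLip_RInt_param : forall H T, LLip H ->
  LLip (fun (_ : R) e => RInt (fun t => H t e) 0 T).
Proof.
  intros H T HH r Hr.
  destruct (HH (r + Rabs T)) as [L [HL Hl]]. pose proof (Rabs_pos T); lra.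
  exists (Rabs T * L). split. apply Rmult_le_pos; auto; apply Rabs_pos.
  intros y y' e e' Hy Hy' He He'.
  apply Rle_trans with (Rabs (T - 0) * (L * Rabs (e - e'))). apply RInt_diff_bound.
  1,2: apply ex_RInt_cont; intros; apply LLip_cont_x; auto.
  intros t Ht.
  assert (Rabs t <= Rabs T).
  { apply Rabs_le. unfold Rmin, Rmax in Ht. destruct Rle_dec;
    pose proof (Rle_abs T); pose proof (Rle_abs (-T)); rewrite Rabs_Ropp in *; lra. }
  eapply Rle_trans. apply Hl; pose proof (Rabs_pos T); try lra.
  rewrite Rminus_diag, Rabs_R0, Rplus_0_l. apply Rle_refl.
  rewrite Rminus_0_r, Rmult_assoc. apply Rmult_le_compat_l. apply Rabs_pos.
  apply Rmult_le_compat_l; auto. pose proof (Rabs_pos (y - y')); lra.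
Qed.

Lemma LLip_slice2 : forall F c, LLip F -> LLip (fun x t => F t (g x + c)).
Proof.
  intros F c HF r Hr.
  destruct (HF (r + Rabs c + 2)) as [L [HL Hl]]. pose proof (Rabs_pos c); lra.
  exists (L * (2 * PI + 1)). split. pose proof PI_RGT_0. nra.
  intros x x' t t' Hx Hx' Ht Ht'.
  assert (Hr2 : forall z, Rabs (g z + c) <= r + Rabs c + 2).
  { intros z. pose proof (g_range z). pose proof (Rabs_pos c).
    eapply Rle_trans. apply Rabs_triang. rewrite (Rabs_right (g z)) by lra. lra. }
  eapply Rle_trans. apply Hl; auto; pose proof (Rabs_pos c); lra.
  replace (g x + c - (g x' + c)) with (g x - g x') by ring.
  pose proof (g_lip x x'). pose proof PI_RGT_0.
  pose proof (Rabs_pos (x - x')). pose proof (Rabs_pos (t - t')).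
  apply Rle_trans with (L * (Rabs (t - t') + 2 * PI * Rabs (x - x'))).
  apply Rmult_le_compat_l; lra.
  replace (L * (2 * PI + 1) * (Rabs (x - x') + Rabs (t - t'))) with (L * ((2 * PI + 1) * (Rabs (x - x') + Rabs (t - t')))) by ring.
  apply Rmult_le_compat_l; auto. nra.
Qed.

Lemma Fk_fubini : forall k H T, LLip H -> forall c,
  Fk k (fun _ e => RInt (fun t => H t e) 0 T) 0 c = RInt (fun t => Fk k H t c) 0 T.
Proof.
  induction k as [|k IH]; intros H T HH c.
  - reflexivity.
  - rewrite Fk_S.
    rewrite (RInt_ext _ (fun x => RInt (fun t => Fk k H t (g x + c)) 0 T)).
    2: { intros x _. apply IH; auto. }
    rewrite (fubini2 (fun x t => Fk k H t (g x + c))).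
    2: { apply LLip_slice2. apply Fk_LLip; auto. }
    apply RInt_ext. intros t _. rewrite Fk_S. reflexivity.
Qed.

Lemma PI_ge_3 : 3 <= PI.
Proof. pose proof PI2_3_2. lra. Qed.

Lemma sin_ge_half : forall u, 0 <= u <= 3/2 -> u / 2 <= sin u.
Proof.
  intros u [H1 H2]. pose proof PI_ge_3 as Hpi.
  pose proof (sin_bound u 0 H1 ltac:(lra)) as [Hs _]. unfold sin_approx, sin_term in Hs. simpl in Hs.
  assert (u * u <= 9/4) by nra. nra.
Qed.

Lemma sin_le_id : forall u, 0 <= u -> sin u <= u.
Proof.
  intros u Hu. pose proof (sin_lip u 0). rewrite sin_0, !Rminus_0_r in H.
  pose proof (Rle_abs (sin u)). rewrite (Rabs_right u) in H by lra. lra.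
Qed.

Ltac cont_tac := apply (ex_derive_continuous (K:=R_AbsRing) (V:=R_NormedModule)); unfold g; auto_derive; auto.

Lemma ibp_bound : forall (Phi dPhi w dw Psi : R -> R) a b,
  a <= b ->
  (forall x, a <= x <= b -> is_derive Phi x (dPhi x)) ->
  (forall x, a <= x <= b -> is_derive w x (dw x)) ->
  (forall x, a <= x <= b -> continuous dPhi x) ->
  (forall x, a <= x <= b -> continuous dw x) ->
  (forall x, Rabs (Phi x) <= 1) ->
  (forall x, a <= x <= b -> Psi x = dPhi x * w x) ->
  ((forall x, a <= x <= b -> 0 <= dw x) \/ (forall x, a <= x <= b -> dw x <= 0)) ->
  Rabs (RInt Psi a b) <= 2 * (Rabs (w a) + Rabs (w b)).
Proof.
  intros Phi dPhi w dw Psi a b Hab HdP Hdw HcP Hcw HP HPsi Hsgn.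
  assert (Hmm : forall x, Rmin a b <= x <= Rmax a b -> a <= x <= b).
  { intros x. rewrite Rmin_left, Rmax_right; lra. }
  assert (HcPhi : forall x, a <= x <= b -> continuous Phi x).
  { intros. apply (ex_derive_continuous (K:=R_AbsRing) (V:=R_NormedModule)). eexists; apply HdP; auto. }
  assert (Hcwx : forall x, a <= x <= b -> continuous w x).
  { intros. apply (ex_derive_continuous (K:=R_AbsRing) (V:=R_NormedModule)). eexists; apply Hdw; auto. }
  assert (I1 : is_RInt (fun x => dPhi x * w x + Phi x * dw x) a b (Phi b * w b - Phi a * w a)).
  { apply (is_RInt_derive (V:=R_CompleteNormedModule) (fun x => Phi x * w x)).
    - intros x Hx. apply Hmm in Hx. apply (is_derive_mult Phi w); auto.
      intros; apply Rmult_comm.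
    - intros x Hx. apply Hmm in Hx.
      apply (continuous_plus (fun x => dPhi x * w x) (fun x => Phi x * dw x));
      apply (continuous_mult (K:=R_AbsRing)); auto. }
  assert (I2 : is_RInt dw a b (w b - w a)).
  { apply (is_RInt_derive (V:=R_CompleteNormedModule) w). intros; apply Hdw; auto. intros; apply Hcw; auto. }
  assert (E2 : ex_RInt (fun x => Phi x * dw x) a b).
  { apply (ex_RInt_continuous (V:=R_CompleteNormedModule)). intros x Hx; apply Hmm in Hx.
    apply (continuous_mult (K:=R_AbsRing)); auto. }
  assert (E1 : ex_RInt (fun x => dPhi x * w x + Phi x * dw x) a b) by (eexists; eauto).
  assert (Edw : ex_RInt dw a b) by (eexists; eauto).
  rewrite (RInt_ext Psi (fun x => (dPhi x * w x + Phi x * dw x) - Phi x * dw x)).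
  2:{ intros x Hx. rewrite HPsi. rg. revert Hx. rewrite Rmin_left, Rmax_right; lra. }
  rewrite RInt_sub; auto.
  rewrite (is_RInt_unique _ _ _ _ I1).
  assert (B : Rabs (RInt (fun x => Phi x * dw x) a b) <= Rabs (w b - w a)).
  { rewrite <- (is_RInt_unique _ _ _ _ I2).
    destruct Hsgn as [Hs|Hs].
    - assert (RInt (fun x => Phi x * dw x) a b <= RInt dw a b).
      { apply RInt_le; auto. intros x Hx. pose proof (Hs x ltac:(lra)). pose proof (HP x).
        unfold Rabs in H0; destruct Rcase_abs; nra. }
      assert (- RInt dw a b <= RInt (fun x => Phi x * dw x) a b).
      { assert (Eq : RInt (fun x => (-1) * dw x + 0 * dw x) a b = - RInt dw a b) by (rewrite RInt_lin; auto; rg).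
        rewrite <- Eq.
        apply RInt_le; auto. apply ex_RInt_lin; auto. intros x Hx. pose proof (Hs x ltac:(lra)). pose proof (HP x).
        unfold Rabs in H1; destruct Rcase_abs; nra. }
      assert (0 <= RInt dw a b).
      { apply Rle_trans with (RInt (fun _ => 0) a b).
        rewrite RInt_const'; lra. apply RInt_le; auto. apply ex_RInt_const. intros; apply Hs; lra. }
      rewrite (Rabs_right (RInt dw a b)) by lra. apply Rabs_le; lra.
    - assert (RInt dw a b <= RInt (fun x => Phi x * dw x) a b).
      { apply RInt_le; auto. intros x Hx. pose proof (Hs x ltac:(lra)). pose proof (HP x).
        unfold Rabs in H0; destruct Rcase_abs; nra. }
      assert (RInt (fun x => Phi x * dw x) a b <= - RInt dw a b).
      { assert (Eq : RInt (fun x => (-1) * dw x + 0 * dw x) a b = - RInt dw a b) by (rewrite RInt_lin; auto; rg).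
        rewrite <- Eq.
        apply RInt_le; auto. apply ex_RInt_lin; auto. intros x Hx. pose proof (Hs x ltac:(lra)). pose proof (HP x).
        unfold Rabs in H1; destruct Rcase_abs; nra. }
      assert (RInt dw a b <= 0).
      { apply Rle_trans with (RInt (fun _ => 0) a b).
        apply RInt_le; auto. apply ex_RInt_const. intros; apply Hs; lra. rewrite RInt_const'; lra. }
      rewrite (Rabs_left1 (RInt dw a b)) by lra. apply Rabs_le; lra. }
  pose proof (HP a). pose proof (HP b).
  pose proof (Rabs_triang (Phi b * w b - Phi a * w a) (- RInt (fun x => Phi x * dw x) a b)).
  unfold Rminus at 1.
  eapply Rle_trans. apply H1.
  rewrite Rabs_Ropp.
  assert (Rabs (Phi b * w b - Phi a * w a) <= Rabs (w b) + Rabs (w a)).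
  { eapply Rle_trans. apply Rabs_triang. rewrite Rabs_Ropp, !Rabs_mult.
    pose proof (Rabs_pos (w a)); pose proof (Rabs_pos (w b)). nra. }
  pose proof (Rabs_triang (w b) (- w a)). rewrite Rabs_Ropp in H3.
  unfold Rminus in B. lra.
Qed.

Definition W (t x : R) : R := / (2 * PI * t * sin (2 * PI * x)).
Definition dW (t x : R) : R := - (2 * PI * t * (2 * PI * cos (2 * PI * x))) * / (2 * PI * t * sin (2 * PI * x)) ^ 2.

Lemma inv_nonneg : forall z, 0 <= z -> 0 <= / z.
Proof. intros z Hz. destruct (Req_dec z 0) as [E|E]. rewrite E, Rinv_0; lra.
  apply Rlt_le, Rinv_0_lt_compat; lra. Qed.

Lemma Wden_nz : forall t x, 0 < t -> sin (2 * PI * x) <> 0 -> 2 * PI * t * sin (2 * PI * x) <> 0.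
Proof. intros. pose proof PI_RGT_0. apply Rmult_integral_contrapositive; split; auto. apply Rgt_not_eq; nra. Qed.

Lemma W_deriv : forall t x, 0 < t -> sin (2 * PI * x) <> 0 -> is_derive (W t) x (dW t x).
Proof.
  intros t x Ht Hs. unfold W, dW. pose proof (Wden_nz t x Ht Hs).
  auto_derive.
  - auto.
  - field. pose proof PI_RGT_0. repeat split; auto; lra.
Qed.

Lemma dW_cont : forall t x, 0 < t -> sin (2 * PI * x) <> 0 -> continuous (dW t) x.
Proof.
  intros t x Ht Hs. pose proof (Wden_nz t x Ht Hs). unfold dW.
  apply (ex_derive_continuous (K:=R_AbsRing) (V:=R_NormedModule)). auto_derive.
  intro E. apply H. nra.
Qed.

Lemma dW_sign_neg : forall t x, 0 < t -> 0 <= cos (2 * PI * x) -> dW t x <= 0.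
Proof.
  intros. unfold dW. pose proof PI_RGT_0.
  assert (0 <= 2 * PI * t * (2 * PI * cos (2 * PI * x))) by (apply Rmult_le_pos; nra).
  assert (0 <= / (2 * PI * t * sin (2 * PI * x)) ^ 2) by (apply inv_nonneg; apply pow2_ge_0).
  nra.
Qed.

Lemma dW_sign_pos : forall t x, 0 < t -> cos (2 * PI * x) <= 0 -> 0 <= dW t x.
Proof.
  intros. unfold dW. pose proof PI_RGT_0.
  assert (2 * PI * t * (2 * PI * cos (2 * PI * x)) <= 0).
  { assert (0 <= 2 * PI * t * (2 * PI)) by nra. nra. }
  assert (0 <= / (2 * PI * t * sin (2 * PI * x)) ^ 2) by (apply inv_nonneg; apply pow2_ge_0).
  nra.
Qed.

Lemma piece : forall t a b, 0 < t -> a <= b ->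
  (forall x, a <= x <= b -> sin (2 * PI * x) <> 0) ->
  ((forall x, a <= x <= b -> 0 <= cos (2 * PI * x)) \/ (forall x, a <= x <= b -> cos (2 * PI * x) <= 0)) ->
  Rabs (RInt (fun x => cos (t * g x)) a b) <= 2 * (Rabs (W t a) + Rabs (W t b)) /\
  Rabs (RInt (fun x => sin (t * g x)) a b) <= 2 * (Rabs (W t a) + Rabs (W t b)).
Proof.
  intros t a b Ht Hab Hs Hc.
  assert (Hsgn : (forall x, a <= x <= b -> 0 <= dW t x) \/ (forall x, a <= x <= b -> dW t x <= 0)).
  { destruct Hc as [Hc|Hc]; [right|left]; intros x Hx.
    apply dW_sign_neg; auto. apply dW_sign_pos; auto. }
  split.
  - apply (ibp_bound (fun x => sin (t * g x)) (fun x => cos (t * g x) * (t * (2 * PI * sin (2 * PI * x))))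
      (W t) (dW t)); auto.
    + intros x _. unfold g. auto_derive; auto. unfold Rminus; ring.
    + intros x Hx. apply W_deriv; auto.
    + intros x _. cont_tac.
    + intros x Hx. apply dW_cont; auto.
    + intros x. apply Rabs_le. pose proof (SIN_bound (t * g x)); lra.
    + intros x Hx. unfold W. field. pose proof PI_RGT_0. repeat split; auto; lra.
  - apply (ibp_bound (fun x => - cos (t * g x)) (fun x => sin (t * g x) * (t * (2 * PI * sin (2 * PI * x))))
      (W t) (dW t)); auto.
    + intros x _. unfold g. auto_derive; auto. unfold Rminus; ring.
    + intros x Hx. apply W_deriv; auto.
    + intros x _. cont_tac.
    + intros x Hx. apply dW_cont; auto.
    + intros x. apply Rabs_le. pose proof (COS_bound (t * g x)); lra.
    + intros x Hx. unfold W. field. pose proof PI_RGT_0. repeat split; auto; lra.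
Qed.

Lemma chasles' : forall (f : R -> R) a b c, (forall x, continuous f x) ->
  RInt f a c = RInt f a b + RInt f b c.
Proof.
  intros. symmetry. apply (RInt_Chasles (V:=R_CompleteNormedModule)); apply ex_RInt_cont; auto.
Qed.

Lemma short_piece : forall (f : R -> R) a b, a <= b -> (forall x, continuous f x) ->
  (forall x, Rabs (f x) <= 1) -> Rabs (RInt f a b) <= b - a.
Proof.
  intros f a b Hab Hc Hb. eapply Rle_trans. apply abs_RInt_le; auto. apply ex_RInt_cont; auto.
  rewrite <- (Rmult_1_r (b - a)). rewrite <- RInt_const'. apply RInt_le; auto.
  apply ex_RInt_abs, ex_RInt_cont; auto. apply ex_RInt_const.
Qed.

Lemma sum7 : forall (f : R -> R) d B, 0 < d <= /8 -> (forall x, continuous f x) ->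
  (forall x, Rabs (f x) <= 1) ->
  Rabs (RInt f (-/2 + d) (-/4)) <= B -> Rabs (RInt f (-/4) (-d)) <= B ->
  Rabs (RInt f d (/4)) <= B -> Rabs (RInt f (/4) (/2 - d)) <= B ->
  Rabs (RInt f (-/2) (/2)) <= 4 * d + 4 * B.
Proof.
  intros f d B Hd Hc Hb H1 H2 H3 H4.
  rewrite (chasles' f (-/2) (-/2 + d) (/2)) by auto.
  rewrite (chasles' f (-/2 + d) (-/4) (/2)) by auto.
  rewrite (chasles' f (-/4) (-d) (/2)) by auto.
  rewrite (chasles' f (-d) d (/2)) by auto.
  rewrite (chasles' f d (/4) (/2)) by auto.
  rewrite (chasles' f (/4) (/2 - d) (/2)) by auto.
  pose proof (short_piece f (-/2) (-/2 + d) ltac:(lra) Hc Hb).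
  pose proof (short_piece f (-d) d ltac:(lra) Hc Hb).
  pose proof (short_piece f (/2 - d) (/2) ltac:(lra) Hc Hb).
  match goal with |- Rabs (?a1 + (?a2 + (?a3 + (?a4 + (?a5 + (?a6 + ?a7)))))) <= _ =>
    pose proof (Rabs_triang a1 (a2 + (a3 + (a4 + (a5 + (a6 + a7))))));
    pose proof (Rabs_triang a2 (a3 + (a4 + (a5 + (a6 + a7)))));
    pose proof (Rabs_triang a3 (a4 + (a5 + (a6 + a7))));
    pose proof (Rabs_triang a4 (a5 + (a6 + a7)));
    pose proof (Rabs_triang a5 (a6 + a7));
    pose proof (Rabs_triang a6 a7) end.
  lra.
Qed.

Lemma W_le : forall t x m, 0 < t -> 0 < m -> m <= Rabs (sin (2 * PI * x)) ->
  Rabs (W t x) <= / (2 * PI * t * m).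
Proof.
  intros t x m Ht Hm Hs. pose proof PI_RGT_0. unfold W.
  assert (sin (2 * PI * x) <> 0) by (intro E; rewrite E, Rabs_R0 in Hs; lra).
  rewrite Rabs_inv. apply Rinv_le_contravar. apply Rmult_lt_0_compat; nra.
  rewrite !Rabs_mult. rewrite (Rabs_right 2), (Rabs_right PI), (Rabs_right t) by lra.
  apply Rmult_le_compat_l; nra.
Qed.

Lemma decay1 : forall t, 1 <= t ->
  Rabs (RInt (fun x => cos (t * g x)) (-/2) (/2)) <= 11 / sqrt t /\
  Rabs (RInt (fun x => sin (t * g x)) (-/2) (/2)) <= 11 / sqrt t.
Proof.
  intros t Ht. pose proof PI_ge_3 as Hpi. pose proof PI_4.
  assert (Hst : 1 <= sqrt t) by (rewrite <- sqrt_1; apply sqrt_le_1_alt; lra).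
  assert (Hsq : sqrt t * sqrt t = t) by (apply sqrt_sqrt; lra).
  set (d := / (8 * sqrt t)).
  assert (Hd : 0 < d <= /8).
  { unfold d. split. apply Rinv_0_lt_compat; lra. apply Rinv_le_contravar; lra. }
  assert (Hsd : PI * d <= sin (2 * PI * d)).
  { assert (2*PI*d <= 3/2) by nra. pose proof (sin_ge_half (2*PI*d) ltac:(split; nra)). lra. }
  assert (Hsdp : 0 < PI * d) by nra.
  assert (Ht0 : 0 < t) by lra.
  assert (Wd : forall x, PI * d <= Rabs (sin (2 * PI * x)) -> Rabs (W t x) <= / (2 * PI * t * (PI * d))).
  { intros. apply W_le; auto. }
  assert (Wq : forall x, 1 <= Rabs (sin (2 * PI * x)) -> Rabs (W t x) <= / (2 * PI * t * 1)).
  { intros. apply W_le; auto; lra. }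
  assert (E1 : Rabs (sin (2 * PI * d)) = sin (2 * PI * d)) by (apply Rabs_right; lra).
  assert (E2 : Rabs (sin (2 * PI * (-d))) = sin (2 * PI * d)).
  { replace (2 * PI * (-d)) with (- (2 * PI * d)) by ring. rewrite sin_neg, Rabs_Ropp. auto. }
  assert (E3 : Rabs (sin (2 * PI * (/2 - d))) = sin (2 * PI * d)).
  { replace (2 * PI * (/2 - d)) with (PI - 2 * PI * d) by field. rewrite sin_PI_x. auto. }
  assert (E4 : Rabs (sin (2 * PI * (-/2 + d))) = sin (2 * PI * d)).
  { replace (2 * PI * (-/2 + d)) with (- (PI - 2 * PI * d)) by field. rewrite sin_neg, Rabs_Ropp, sin_PI_x. auto. }
  assert (E5 : Rabs (sin (2 * PI * (/4))) = 1).
  { replace (2 * PI * (/4)) with (PI / 2) by field. rewrite sin_PI2, Rabs_R1; auto. }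
  assert (E6 : Rabs (sin (2 * PI * (-/4))) = 1).
  { replace (2 * PI * (-/4)) with (- (PI / 2)) by field. rewrite sin_neg, Rabs_Ropp, sin_PI2, Rabs_R1; auto. }
  set (B := 2 * (/ (2 * PI * t * (PI * d)) + / (2 * PI * t * 1))).
  assert (PB : forall a b, a <= b -> (forall x, a <= x <= b -> sin (2 * PI * x) <> 0) ->
     ((forall x, a <= x <= b -> 0 <= cos (2 * PI * x)) \/ (forall x, a <= x <= b -> cos (2 * PI * x) <= 0)) ->
     (Rabs (W t a) <= / (2 * PI * t * (PI * d)) /\ Rabs (W t b) <= / (2 * PI * t * 1) \/
      Rabs (W t a) <= / (2 * PI * t * 1) /\ Rabs (W t b) <= / (2 * PI * t * (PI * d))) ->
     Rabs (RInt (fun x => cos (t * g x)) a b) <= B /\ Rabs (RInt (fun x => sin (t * g x)) a b) <= B).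
  { intros a b Hab Hs Hc Hw. destruct (piece t a b Ht0 Hab Hs Hc) as [P1 P2].
    unfold B. destruct Hw as [[Wa Wb]|[Wa Wb]]; split; lra. }
  assert (S1 : forall u, 0 < u < PI -> sin u <> 0) by (intros u Hu; apply Rgt_not_eq, sin_gt_0; lra).
  assert (S2 : forall u, 0 < u < PI -> sin (- u) <> 0) by (intros u Hu; rewrite sin_neg; apply Ropp_neq_0_compat, S1; auto).
  assert (P1 : Rabs (RInt (fun x => cos (t * g x)) (-/2 + d) (-/4)) <= B /\
               Rabs (RInt (fun x => sin (t * g x)) (-/2 + d) (-/4)) <= B).
  { apply PB. lra.
    - intros x Hx. replace (2 * PI * x) with (- (- (2 * PI * x))) by ring. apply S2. nra.
    - right. intros x Hx. rewrite <- cos_neg. apply cos_le_0; nra.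
    - left. split. apply Wd. rewrite E4; lra. apply Wq. rewrite E6; lra. }
  assert (P2 : Rabs (RInt (fun x => cos (t * g x)) (-/4) (-d)) <= B /\
               Rabs (RInt (fun x => sin (t * g x)) (-/4) (-d)) <= B).
  { apply PB. lra.
    - intros x Hx. replace (2 * PI * x) with (- (- (2 * PI * x))) by ring. apply S2. nra.
    - left. intros x Hx. apply cos_ge_0; nra.
    - right. split. apply Wq. rewrite E6; lra. apply Wd. rewrite E2; lra. }
  assert (P3 : Rabs (RInt (fun x => cos (t * g x)) d (/4)) <= B /\
               Rabs (RInt (fun x => sin (t * g x)) d (/4)) <= B).
  { apply PB. lra.
    - intros x Hx. apply S1. nra.
    - left. intros x Hx. apply cos_ge_0; nra.
    - left. split. apply Wd. rewrite E1; lra. apply Wq. rewrite E5; lra. }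
  assert (P4 : Rabs (RInt (fun x => cos (t * g x)) (/4) (/2 - d)) <= B /\
               Rabs (RInt (fun x => sin (t * g x)) (/4) (/2 - d)) <= B).
  { apply PB. lra.
    - intros x Hx. apply S1. nra.
    - right. intros x Hx. apply cos_le_0; nra.
    - right. split. apply Wq. rewrite E5; lra. apply Wd. rewrite E3; lra. }
  assert (HB : 4 * d + 4 * B <= 11 / sqrt t).
  { unfold B, d. clear - Hst Hsq Hpi. set (s := sqrt t) in *.
    assert (0 < s) by lra.
    replace (/ (2 * PI * t * (PI * / (8 * s)))) with (4 / (PI * PI * s)).
    2:{ rewrite <- Hsq. field. split; lra. }
    assert (4 / (PI * PI * s) <= 4 / (9 * s)).
    { unfold Rdiv. apply Rmult_le_compat_l. lra. apply Rinv_le_contravar. nra. assert (9 <= PI*PI) by nra; nra. }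
    assert (/ (2 * PI * t * 1) <= / (6 * s)).
    { apply Rinv_le_contravar. nra. nra. }
    assert (4 * / (8 * s) = /(2 * s)) by (field; lra).
    assert (4 / (9 * s) = (4/9) * / s) by (field; lra).
    assert (/ (6 * s) = (1/6) * / s) by (field; lra).
    assert (/ (2 * s) = (1/2) * / s) by (field; lra).
    assert (0 < / s) by (apply Rinv_0_lt_compat; lra).
    unfold Rdiv in *. lra. }
  split.
  - eapply Rle_trans. apply (sum7 (fun x => cos (t * g x)) d B Hd).
    intros; cont_tac. intros; apply Rabs_le; pose proof (COS_bound (t * g x)); lra.
    apply P1. apply P2. apply P3. apply P4. auto.
  - eapply Rle_trans. apply (sum7 (fun x => sin (t * g x)) d B Hd).
    intros; cont_tac. intros; apply Rabs_le; pose proof (SIN_bound (t * g x)); lra.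
    apply P1. apply P2. apply P3. apply P4. auto.
Qed.

Definition Hs (t : R) := fun y e => sin (y - t * e).
Definition Hc (t : R) := fun y e => cos (y - t * e).
Definition C1 (t : R) := RInt (fun x => cos (t * g x)) (-/2) (/2).
Definition S1 (t : R) := RInt (fun x => sin (t * g x)) (-/2) (/2).
Definition Mt (t : R) := Rabs (C1 t) + Rabs (S1 t).

Lemma LLip_trig : forall (h : R -> R) t, (forall a b, Rabs (h a - h b) <= Rabs (a - b)) ->
  LLip (fun y e => h (y - t * e)).
Proof.
  intros h t Hh r Hr. exists (1 + Rabs t). split. pose proof (Rabs_pos t); lra.
  intros. eapply Rle_trans. apply Hh.
  replace (y - t * e - (y' - t * e')) with ((y - y') + (- t) * (e - e')) by ring.
  eapply Rle_trans. apply Rabs_triang. rewrite Rabs_mult, Rabs_Ropp.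
  pose proof (Rabs_pos t); pose proof (Rabs_pos (y - y')); pose proof (Rabs_pos (e - e')). nra.
Qed.

Lemma LLip_Hs : forall t, LLip (Hs t).
Proof. intros. apply LLip_trig. apply sin_lip. Qed.
Lemma LLip_Hc : forall t, LLip (Hc t).
Proof. intros. apply LLip_trig. apply cos_lip. Qed.

Lemma cont_tg : forall t x, continuous (fun x => cos (t * g x)) x /\ continuous (fun x => sin (t * g x)) x.
Proof. intros; split; cont_tac. Qed.

Lemma Fk_trig : forall k t y c,
  Rabs (Fk k (Hs t) y c) <= Mt t ^ k /\ Rabs (Fk k (Hc t) y c) <= Mt t ^ k.
Proof.
  induction k as [|k IH]; intros t y c.
  - rewrite !Fk_0. unfold Hs, Hc. simpl. split; apply Rabs_le;
    [pose proof (SIN_bound (y - t * (0 + c)))|pose proof (COS_bound (y - t * (0 + c)))]; lra.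
  - assert (Es : forall x, Fk k (Hs t) y (g x + c) =
        cos (t * g x) * Fk k (Hs t) y c + (- sin (t * g x)) * Fk k (Hc t) y c).
    { intros x. rewrite <- Fk_lin by (apply LLip_Hs || apply LLip_Hc).
      unfold Fk. f_equal. apply functional_extensionality. intros q. unfold Hs, Hc.
      replace (y - t * (edisp k q + (g x + c))) with ((y - t * (edisp k q + c)) - t * g x) by ring.
      rewrite sin_minus. ring. }
    assert (Ec : forall x, Fk k (Hc t) y (g x + c) =
        cos (t * g x) * Fk k (Hc t) y c + sin (t * g x) * Fk k (Hs t) y c).
    { intros x. rewrite <- Fk_lin by (apply LLip_Hs || apply LLip_Hc).
      unfold Fk. f_equal. apply functional_extensionality. intros q. unfold Hs, Hc.
      replace (y - t * (edisp k q + (g x + c))) with ((y - t * (edisp k q + c)) - t * g x) by ring.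
      rewrite cos_minus. ring. }
    destruct (IH t y c) as [Bs Bc].
    assert (ExC : ex_RInt (fun x => cos (t * g x)) (-/2) (/2)) by (apply ex_RInt_cont; intros; apply cont_tg).
    assert (ExS : ex_RInt (fun x => sin (t * g x)) (-/2) (/2)) by (apply ex_RInt_cont; intros; apply cont_tg).
    pose proof (Rabs_pos (C1 t)). pose proof (Rabs_pos (S1 t)).
    pose proof (Rabs_pos (Fk k (Hs t) y c)). pose proof (Rabs_pos (Fk k (Hc t) y c)).
    simpl. unfold Mt in *. split; rewrite Fk_S.
    + rewrite (RInt_ext _ (fun x => Fk k (Hs t) y c * cos (t * g x) + (- Fk k (Hc t) y c) * sin (t * g x))).
      2:{ intros x _. rewrite Es. rg. }
      rewrite RInt_lin by auto. fold (C1 t) (S1 t).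
      eapply Rle_trans. apply Rabs_triang. rewrite !Rabs_mult, Rabs_Ropp.
      nra.
    + rewrite (RInt_ext _ (fun x => Fk k (Hc t) y c * cos (t * g x) + (Fk k (Hs t) y c) * sin (t * g x))).
      2:{ intros x _. rewrite Ec. rg. }
      rewrite RInt_lin by auto. fold (C1 t) (S1 t).
      eapply Rle_trans. apply Rabs_triang. rewrite !Rabs_mult.
      nra.
Qed.

Lemma Mt_le2 : forall t, Mt t <= 2.
Proof.
  intros. unfold Mt, C1, S1.
  pose proof (short_piece (fun x => cos (t * g x)) (-/2) (/2) ltac:(lra) (fun x => proj1 (cont_tg t x))
    (fun x => ltac:(apply Rabs_le; pose proof (COS_bound (t * g x)); lra))).
  pose proof (short_piece (fun x => sin (t * g x)) (-/2) (/2) ltac:(lra) (fun x => proj2 (cont_tg t x))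
    (fun x => ltac:(apply Rabs_le; pose proof (SIN_bound (t * g x)); lra))).
  lra.
Qed.

Lemma Mt_decay : forall t, 1 <= t -> Mt t <= 22 / sqrt t.
Proof. intros. destruct (decay1 t H). unfold Mt, C1, S1. lra. Qed.

Definition Kd (d : nat) : R := 22 ^ 3 * 2 ^ (d - 3).

Lemma Fk_trig_decay : forall d t y, (3 <= d)%nat -> 1 <= t ->
  Rabs (Fk d (Hs t) y 0) <= Kd d / (t * sqrt t) /\ Rabs (Fk d (Hc t) y 0) <= Kd d / (t * sqrt t).
Proof.
  intros d t y Hd Ht.
  assert (HM : Mt t ^ d <= Kd d / (t * sqrt t)).
  { assert (0 <= Mt t) by (unfold Mt; pose proof (Rabs_pos (C1 t)); pose proof (Rabs_pos (S1 t)); lra).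
    replace d with (3 + (d - 3))%nat by lia. rewrite pow_add. unfold Kd.
    replace (3 + (d - 3) - 3)%nat with (d - 3)%nat by lia.
    assert (Mt t ^ (d - 3) <= 2 ^ (d - 3)) by (apply pow_incr; split; auto; apply Mt_le2).
    assert (Mt t ^ 3 <= (22 / sqrt t) ^ 3) by (apply pow_incr; split; auto; apply Mt_decay; auto).
    assert (Hst : 1 <= sqrt t) by (rewrite <- sqrt_1; apply sqrt_le_1_alt; lra).
    assert (Hsq : sqrt t * sqrt t = t) by (apply sqrt_sqrt; lra).
    assert ((22 / sqrt t) ^ 3 = 22 ^ 3 / (t * sqrt t)).
    { rewrite <- Hsq at 2. field. lra. }
    rewrite H2 in H1.
    assert (0 <= Mt t ^ 3) by (apply pow_le; auto).
    assert (0 <= 2 ^ (d - 3)) by (apply pow_le; lra).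
    assert (0 <= Mt t ^ (d-3)) by (apply pow_le; lra).
    apply Rle_trans with (22 ^ 3 / (t * sqrt t) * 2 ^ (d - 3)).
    apply Rmult_le_compat; auto.
    unfold Rdiv. lra. }
  destruct (Fk_trig d t y 0). split; lra.
Qed.

Lemma exp_lip_neg : forall a b, a <= 0 -> b <= 0 -> Rabs (exp a - exp b) <= Rabs (a - b).
Proof.
  intros a b Ha Hb.
  destruct (MVT_gen exp b a exp) as [c [Hc Heq]].
  - intros; apply is_derive_exp.
  - intros x _. apply continuity_pt_filterlim. apply (ex_derive_continuous (K:=R_AbsRing) (V:=R_NormedModule)).
    eexists; apply is_derive_exp.
  - rewrite Heq, Rabs_mult. rewrite <- (Rmult_1_l (Rabs (a - b))) at 2. apply Rmult_le_compat_r. apply Rabs_pos.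
    rewrite Rabs_right by (apply Rle_ge, Rlt_le, exp_pos).
    assert (c <= 0). { destruct Hc as [_ Hc]. eapply Rle_trans. apply Hc. apply Rmax_lub; lra. }
    rewrite <- exp_0. destruct (Rle_lt_or_eq_dec c 0 H). apply Rlt_le, exp_increasing; auto. rewrite e; lra.
Qed.

Lemma exp_neg_le1 : forall a, a <= 0 -> 0 < exp a <= 1.
Proof. intros. split. apply exp_pos. rewrite <- exp_0. destruct (Rle_lt_or_eq_dec a 0 H). apply Rlt_le, exp_increasing; auto. rewrite e; lra. Qed.

Lemma tail_int : forall K T0 T, 0 <= K -> 1 <= T0 <= T ->
  is_RInt (fun t => K / (t * sqrt t)) T0 T (2 * K / sqrt T0 - 2 * K / sqrt T).
Proof.
  intros K T0 T HK HT.
  assert (E : minus ((fun t => - 2 * K / sqrt t) T) ((fun t => - 2 * K / sqrt t) T0) = 2 * K / sqrt T0 - 2 * K / sqrt T).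
  { unfold minus, plus, opp; simpl. assert (0 < sqrt T) by (apply sqrt_lt_R0; lra).
    assert (0 < sqrt T0) by (apply sqrt_lt_R0; lra). field. split; lra. }
  rewrite <- E.
  apply (is_RInt_derive (V:=R_CompleteNormedModule) (fun t => - 2 * K / sqrt t) (fun t => K / (t * sqrt t))).
  - intros x Hx. rewrite Rmin_left, Rmax_right in Hx by lra.
    assert (0 < sqrt x) by (apply sqrt_lt_R0; lra).
    auto_derive. lra. 
    assert (sqrt x * sqrt x = x) by (apply sqrt_sqrt; lra).
    rewrite H0. field. split; lra.
  - intros x Hx. rewrite Rmin_left, Rmax_right in Hx by lra.
    assert (0 < sqrt x) by (apply sqrt_lt_R0; lra).
    apply (ex_derive_continuous (K:=R_AbsRing) (V:=R_NormedModule)). auto_derive. split. lra. nra.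
Qed.

Lemma RInt_abs_bound : forall (f h : R -> R) a b, a <= b -> ex_RInt f a b -> ex_RInt h a b ->
  (forall x, a <= x <= b -> Rabs (f x) <= h x) -> Rabs (RInt f a b) <= RInt h a b.
Proof.
  intros. eapply Rle_trans. apply abs_RInt_le; auto. apply RInt_le; auto.
  apply ex_RInt_abs; auto. intros; apply H2; lra.
Qed.

Lemma cont_expS : forall (S : R -> R) u, (forall t, continuous S t) -> forall t, continuous (fun t => exp (- u * t) * S t) t.
Proof.
  intros S u HS t. apply (continuous_mult (K:=R_AbsRing) (fun t => exp (- u * t)) S); auto.
  apply (ex_derive_continuous (K:=R_AbsRing) (V:=R_NormedModule)). auto_derive. auto.
Qed.

Lemma exp_small : forall e T eta, 0 < e -> 0 < eta -> 16 / (e ^ 2 * eta) <= T ->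
  2 * exp (- e * T) / e <= eta / 8.
Proof.
  intros e T eta He Heta HT.
  assert (0 < T). { eapply Rlt_le_trans; [|apply HT]. apply Rdiv_lt_0_compat. lra. apply Rmult_lt_0_compat; nra. }
  pose proof (exp_ineq1_le (e * T)).
  assert (exp (- e * T) = / exp (e * T)) by (rewrite <- exp_Ropp; f_equal; ring).
  rewrite H1.
  assert (0 < e * T) by nra.
  assert (/ exp (e * T) <= / (e * T)) by (apply Rinv_le_contravar; lra).
  assert (16 <= e ^ 2 * eta * T).
  { assert (0 < e ^ 2 * eta) by (apply Rmult_lt_0_compat; [apply pow_lt|]; lra).
    apply Rmult_le_reg_r with (/ (e ^ 2 * eta)). apply Rinv_0_lt_compat; lra.
    replace (e ^ 2 * eta * T * / (e ^ 2 * eta)) with T by (field; lra). unfold Rdiv in HT. lra. }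
  apply Rle_trans with (2 * / (e * T) / e).
  unfold Rdiv. apply Rmult_le_compat_r. apply Rlt_le, Rinv_0_lt_compat; lra. lra.
  apply Rmult_le_reg_r with (e ^ 2 * T * 8). nra.
  replace (2 * / (e * T) / e * (e ^ 2 * T * 8)) with 16 by (field; split; lra).
  replace (eta / 8 * (e ^ 2 * T * 8)) with (e ^ 2 * eta * T) by (field; lra). lra.
Qed.

Lemma limit_abstract : forall (S Th : R -> R) K, 0 <= K ->
  (forall t, continuous S t) -> (forall t, Rabs (S t) <= 1) ->
  (forall t, 1 <= t -> Rabs (S t) <= K / (t * sqrt t)) ->
  (forall e T, 0 < e -> 0 <= T -> Rabs (Th e - RInt (fun t => exp (- e * t) * S t) 0 T) <= 2 * exp (- e * T) / e) ->
  exists L, filterlim Th (at_right 0) (locally L).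
Proof.
  intros S Th K HK HSc HS1 HSd HTh.
  apply (proj1 (filterlim_locally_cauchy (U:=R_CompleteSpace) (F:=at_right 0) Th)).
  intros eta. pose proof (cond_pos eta) as Heta.
  set (T0 := Rmax 1 ((8 * K / eta) ^ 2)).
  assert (HT01 : 1 <= T0) by apply Rmax_l.
  assert (HT0K : 2 * K / sqrt T0 <= eta / 4).
  { assert (8 * K / eta <= sqrt T0).
    { rewrite <- (sqrt_pow2 (8 * K / eta)). apply sqrt_le_1_alt. apply Rmax_r.
      apply Rmult_le_pos. lra. apply Rlt_le, Rinv_0_lt_compat; lra. }
    assert (0 < sqrt T0) by (apply sqrt_lt_R0; lra).
    apply Rmult_le_reg_r with (sqrt T0 * 4 / eta). apply Rmult_lt_0_compat. lra. apply Rinv_0_lt_compat; lra.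
    replace (2 * K / sqrt T0 * (sqrt T0 * 4 / eta)) with (8 * K / eta) by (field; lra).
    replace (eta / 4 * (sqrt T0 * 4 / eta)) with (sqrt T0) by (field; lra). auto. }
  set (dl := eta / (4 * (T0 * T0) + 1)).
  assert (Hdl : 0 < dl) by (apply Rdiv_lt_0_compat; nra).
  assert (HdlT : dl * T0 * T0 <= eta / 4).
  { unfold dl. apply Rmult_le_reg_r with (4 * (T0 * T0) + 1). nra.
    replace (eta / (4 * (T0 * T0) + 1) * T0 * T0 * (4 * (T0 * T0) + 1)) with (eta * (T0 * T0)) by (field; nra). nra. }
  exists (fun u => 0 < u < dl). split.
  { exists (mkposreal dl Hdl). intros y Hy Hy0. simpl in Hy. unfold ball in Hy; simpl in Hy.
    unfold AbsRing_ball, abs, minus, plus, opp in Hy; simpl in Hy. rewrite Ropp_0, Rplus_0_r in Hy.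
    split; auto. apply Rabs_def2 in Hy. lra. }
  intros u v Hu Hv.
  unfold ball; simpl; unfold AbsRing_ball, abs, minus, plus, opp; simpl.
  set (T := Rmax T0 (Rmax (16 / (u ^ 2 * eta)) (16 / (v ^ 2 * eta)))).
  assert (HTT0 : T0 <= T) by apply Rmax_l.
  assert (Hru : 2 * exp (- u * T) / u <= eta / 8).
  { apply exp_small; try lra. eapply Rle_trans; [|apply Rmax_r]. apply Rmax_l. }
  assert (Hrv : 2 * exp (- v * T) / v <= eta / 8).
  { apply exp_small; try lra. eapply Rle_trans; [|apply Rmax_r]. apply Rmax_r. }
  pose proof (HTh u T ltac:(lra) ltac:(lra)) as Au.
  pose proof (HTh v T ltac:(lra) ltac:(lra)) as Av.
  assert (Ex : forall w a b, ex_RInt (fun t => exp (- w * t) * S t) a b).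
  { intros. apply ex_RInt_cont. apply cont_expS; auto. }
  set (h := fun t => (exp (- v * t) - exp (- u * t)) * S t).
  assert (Hh : forall t, continuous h t).
  { intros t. unfold h. apply (continuous_mult (K:=R_AbsRing) (fun t => exp (- v * t) - exp (- u * t)) S); auto.
    apply (ex_derive_continuous (K:=R_AbsRing) (V:=R_NormedModule)). auto_derive. auto. }
  assert (ED : RInt (fun t => exp (- v * t) * S t) 0 T - RInt (fun t => exp (- u * t) * S t) 0 T = RInt h 0 T).
  { rewrite <- RInt_sub by auto. apply RInt_ext. intros; unfold h; rg. }
  assert (D : Rabs (RInt h 0 T) <= eta / 2).
  { rewrite (chasles' h 0 T0 T Hh).
    assert (P1 : Rabs (RInt h 0 T0) <= T0 * (dl * T0)).
    { eapply Rle_trans. apply RInt_abs_bound with (h := fun _ => dl * T0). lra.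
      apply ex_RInt_cont; auto. apply ex_RInt_const.
      intros x Hx. unfold h. rewrite Rabs_mult.
      pose proof (exp_lip_neg (- v * x) (- u * x) ltac:(nra) ltac:(nra)).
      replace (- v * x - - u * x) with ((u - v) * x) in H by ring.
      rewrite Rabs_mult, (Rabs_right x) in H by lra.
      assert (Rabs (u - v) < dl) by (apply Rabs_def1; lra).
      pose proof (HS1 x). pose proof (Rabs_pos (S x)). pose proof (Rabs_pos (exp (- v * x) - exp (- u * x))).
      apply Rle_trans with (Rabs (u - v) * x * 1). apply Rmult_le_compat; auto. nra.
      rewrite RInt_const'. lra. }
    assert (P2 : Rabs (RInt h T0 T) <= 2 * K / sqrt T0).
    { eapply Rle_trans. apply RInt_abs_bound with (h := fun t => K / (t * sqrt t)). auto.
      apply ex_RInt_cont; auto. eexists. apply tail_int; auto; lra.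
      intros x Hx. unfold h. rewrite Rabs_mult.
      pose proof (exp_neg_le1 (- v * x) ltac:(nra)). pose proof (exp_neg_le1 (- u * x) ltac:(nra)).
      assert (Rabs (exp (- v * x) - exp (- u * x)) <= 1) by (apply Rabs_le; lra).
      pose proof (HSd x ltac:(lra)). pose proof (Rabs_pos (S x)). pose proof (Rabs_pos (exp (- v * x) - exp (- u * x))).
      apply Rle_trans with (1 * (K / (x * sqrt x))). apply Rmult_le_compat; auto. lra.
      rewrite (is_RInt_unique _ _ _ _ (tail_int K T0 T HK ltac:(lra))).
      assert (0 <= 2 * K / sqrt T). { apply Rmult_le_pos. lra. apply Rlt_le, Rinv_0_lt_compat, sqrt_lt_R0; lra. }
      lra. }
    eapply Rle_trans. apply Rabs_triang. nra. }
  replace (Th v + - Th u) with ((Th v - RInt (fun t => exp (- v * t) * S t) 0 T)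
     - (Th u - RInt (fun t => exp (- u * t) * S t) 0 T) + RInt h 0 T) by (rewrite <- ED; ring).
  eapply Rle_lt_trans. apply Rabs_triang. eapply Rle_lt_trans. apply Rplus_le_compat_r. apply Rabs_triang.
  rewrite Rabs_Ropp. lra.
Qed.

Ltac sqnz := match goal with |- ?a * (?a * 1) + ?b * (?b * 1) <> 0 =>
  let z := fresh in set (z := a); apply Rgt_not_eq; pose proof (pow2_ge_0 z); nra end.

Lemma abs_elim : forall z a, Rabs z <= a -> - a <= z <= a.
Proof. intros. unfold Rabs in H; destruct Rcase_abs; lra. Qed.

Lemma dpos : forall z e, 0 < e -> 0 < z ^ 2 + e ^ 2.
Proof. intros. pose proof (pow2_ge_0 z). pose proof (pow_lt e 2 H). lra. Qed.

Lemma g_deriv : forall y, is_derive g y (2 * PI * sin (2 * PI * y)).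
Proof. intros. unfold g. auto_derive; auto. ring. Qed.

Lemma g_mvt : forall a b, exists c, Rmin a b <= c <= Rmax a b /\ g b - g a = 2 * PI * sin (2 * PI * c) * (b - a).
Proof.
  intros. destruct (MVT_gen g a b (fun y => 2 * PI * sin (2 * PI * y))) as [c [Hc Heq]].
  - intros; apply g_deriv.
  - intros x _. apply continuity_pt_filterlim. apply g_cont.
  - exists c. auto.
Qed.

Lemma sin2_near : forall x c, Rabs (sin (2 * PI * c) - sin (2 * PI * x)) <= 2 * PI * Rabs (c - x).
Proof.
  intros. eapply Rle_trans. apply sin_lip. replace (2 * PI * c - 2 * PI * x) with (2 * PI * (c - x)) by ring.
  rewrite Rabs_mult, (Rabs_right (2 * PI)). lra. pose proof PI_RGT_0; lra.
Qed.

Lemma atan_deriv_comp : forall (f : R -> R) df y, is_derive f y df ->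
  is_derive (fun y => atan (f y)) y (df * / (1 + (f y) ^ 2)).
Proof.
  intros. apply (is_derive_comp atan f y (/ (1 + f y ^ 2)) df).
  apply is_derive_Reals, derivable_pt_lim_atan. auto.
Qed.

Lemma atan_ge1 : forall u, 1 <= u -> PI / 4 <= atan u.
Proof. intros. rewrite <- atan_1. destruct (Rle_lt_or_eq_dec 1 u H). apply Rlt_le, atan_increasing; auto. rewrite e; lra. Qed.
Lemma atan_lem1 : forall u, u <= -1 -> atan u <= - (PI / 4).
Proof. intros. rewrite <- atan_1, <- atan_opp. destruct (Rle_lt_or_eq_dec u (-1) H). apply Rlt_le, atan_increasing; auto. rewrite e. right. f_equal. Qed.

Lemma inner1D : forall eps beta x s, 0 < eps -> 0 < s -> 0 <= x -> x + s / (4 * PI) <= /2 ->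
  sin (2 * PI * x) = s -> Rabs (beta - g x) <= s ^ 2 / 8 -> eps <= s ^ 2 / 8 ->
  / (6 * s) <= RInt (fun y => eps / ((beta - g y) ^ 2 + eps ^ 2)) (-/2) (/2).
Proof.
  intros eps beta x s He Hs Hx Hxd Hsx Hb Hes.
  pose proof PI_RGT_0 as Hpi. pose proof PI_ge_3.
  set (dl := s / (4 * PI)).
  assert (Hdl : 0 < dl) by (unfold dl; apply Rdiv_lt_0_compat; lra).
  set (f := fun y => eps / ((beta - g y) ^ 2 + eps ^ 2)).
  assert (Hfc : forall y, continuous f y).
  { intros. unfold f. apply (ex_derive_continuous (K:=R_AbsRing) (V:=R_NormedModule)). unfold g. auto_derive. sqnz. }
  assert (Hf0 : forall y, 0 <= f y).
  { intros. unfold f. apply Rlt_le, Rdiv_lt_0_compat; auto. apply dpos; auto. }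
  assert (Hgd : forall y, Rabs (y - x) <= dl -> PI * s <= 2 * PI * sin (2 * PI * y) <= 3 * PI * s).
  { intros y Hy. pose proof (sin2_near x y).
    assert (2 * PI * Rabs (y - x) <= s / 2) by (unfold dl in Hy; apply Rmult_le_reg_r with (/ (2 * PI)); [apply Rinv_0_lt_compat; lra|];
       replace (2 * PI * Rabs (y - x) * / (2 * PI)) with (Rabs (y - x)) by (field; lra);
       replace (s / 2 * / (2 * PI)) with (s / (4 * PI)) by (field; lra); auto).
    rewrite Hsx in H0. apply abs_elim in H0.
    assert (Hr : s / 2 <= sin (2 * PI * y) <= 3 * s / 2) by lra.
    split; nra. }
  assert (Hup : g (x + dl) - g x >= PI * s * dl).
  { destruct (g_mvt x (x + dl)) as [c [Hc Heq]]. rewrite Rmin_left, Rmax_right in Hc by lra.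
    rewrite Heq. replace (x + dl - x) with dl by ring.
    pose proof (Hgd c ltac:(apply Rabs_le; lra)). nra. }
  assert (Hlo : g x - g (x - dl) >= PI * s * dl).
  { destruct (g_mvt (x - dl) x) as [c [Hc Heq]]. rewrite Rmin_left, Rmax_right in Hc by lra.
    rewrite Heq. replace (x - (x - dl)) with dl by ring.
    pose proof (Hgd c ltac:(apply Rabs_le; lra)). nra. }
  assert (Hmu : PI * s * dl = s ^ 2 / 4) by (unfold dl; field; lra).
  assert (Hwin : / (6 * s) <= RInt f (x - dl) (x + dl)).
  { set (A := fun y => atan ((g y - beta) / eps)).
    set (dA := fun y => 2 * PI * sin (2 * PI * y) * eps / ((beta - g y) ^ 2 + eps ^ 2)).
    assert (HA : forall y, is_derive A y (dA y)).
    { intros y. unfold A, dA.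
      assert (Hd1 : is_derive (fun y => (g y - beta) / eps) y (2 * PI * sin (2 * PI * y) / eps)).
      { unfold g. auto_derive. lra. field. lra. }
      pose proof (atan_deriv_comp _ _ y Hd1) as Hd2.
      replace (2 * PI * sin (2 * PI * y) * eps / ((beta - g y) ^ 2 + eps ^ 2)) with
        (2 * PI * sin (2 * PI * y) / eps * / (1 + ((g y - beta) / eps) ^ 2)). exact Hd2.
      pose proof (dpos (beta - g y) eps He).
      assert (E : 1 + ((g y - beta) / eps) ^ 2 = ((beta - g y) ^ 2 + eps ^ 2) / eps ^ 2) by (field; lra).
      rewrite E. field. split; lra. }
    assert (HdAc : forall y, continuous dA y).
    { intros. unfold dA. apply (ex_derive_continuous (K:=R_AbsRing) (V:=R_NormedModule)). auto_derive. split. eexists; apply g_deriv. split; auto. sqnz. }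
    assert (IA : is_RInt dA (x - dl) (x + dl) (A (x + dl) - A (x - dl))).
    { apply (is_RInt_derive (V:=R_CompleteNormedModule) A dA). intros; apply HA. intros; apply HdAc. }
    assert (Hat : PI / 2 <= A (x + dl) - A (x - dl)).
    { unfold A. pose proof (atan_ge1 ((g (x + dl) - beta) / eps)). pose proof (atan_lem1 ((g (x - dl) - beta) / eps)).
      assert (1 <= (g (x + dl) - beta) / eps).
      { apply Rmult_le_reg_r with eps; auto. unfold Rdiv. rewrite Rmult_assoc, Rinv_l by lra.
        apply abs_elim in Hb. lra. }
      assert ((g (x - dl) - beta) / eps <= -1).
      { apply Rmult_le_reg_r with eps; auto. unfold Rdiv. rewrite Rmult_assoc, Rinv_l by lra.
        apply abs_elim in Hb. lra. }
      specialize (H0 H2). specialize (H1 H3). lra. }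
    assert (Hcmp : forall y, x - dl <= y <= x + dl -> dA y / (3 * PI * s) <= f y).
    { intros y Hy. pose proof (Hgd y ltac:(apply Rabs_le; lra)). unfold dA, f.
      assert (0 < (beta - g y) ^ 2 + eps ^ 2) by (apply dpos; auto).
      assert (0 < 3 * PI * s) by nra.
      replace (2 * PI * sin (2 * PI * y) * eps / ((beta - g y) ^ 2 + eps ^ 2) / (3 * PI * s)) with
        ((2 * PI * sin (2 * PI * y)) / (3 * PI * s) * (eps / ((beta - g y) ^ 2 + eps ^ 2))) by (field; lra).
      apply Rle_trans with (1 * (eps / ((beta - g y) ^ 2 + eps ^ 2))). 2: lra.
      apply Rmult_le_compat_r. apply Rlt_le, Rdiv_lt_0_compat; lra.
      unfold Rdiv. apply Rmult_le_reg_r with (3 * PI * s). auto.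
      rewrite Rmult_assoc, Rinv_l by lra. lra. }
    apply Rle_trans with (RInt (fun y => dA y / (3 * PI * s)) (x - dl) (x + dl)).
    - rewrite (RInt_ext _ (fun y => (/ (3 * PI * s)) * dA y + 0 * dA y)) by (intros; unfold Rdiv; rg).
      rewrite RInt_lin by (eexists; eauto). rewrite (is_RInt_unique _ _ _ _ IA).
      apply Rmult_le_reg_r with (6 * s). lra.
      rewrite Rinv_l by lra. 
      assert (0 < / (3 * PI * s)) by (apply Rinv_0_lt_compat; nra).
      apply Rle_trans with (/ (3 * PI * s) * (PI / 2) * (6 * s)).
      right. field. lra. 
      apply Rmult_le_compat_r. lra. nra.
    - apply RInt_le. lra. apply ex_RInt_cont. intros. apply (continuous_mult (K:=R_AbsRing) dA (fun _ => / (3 * PI * s))); auto. apply continuous_const.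
      apply ex_RInt_cont; auto. intros y Hy. apply Hcmp; lra. }
  rewrite (chasles' f (-/2) (x - dl) (/2)) by auto.
  rewrite (chasles' f (x - dl) (x + dl) (/2)) by auto.
  assert (0 <= RInt f (-/2) (x - dl)).
  { rewrite <- (Rmult_0_r (x - dl - - / 2)), <- RInt_const'. apply RInt_le.
    assert (dl <= / 4) by (unfold dl; apply Rmult_le_reg_r with (4 * PI); [lra|]; replace (s / (4 * PI) * (4 * PI)) with s by (field; lra);
      pose proof (SIN_bound (2 * PI * x)); nra). lra.
    apply ex_RInt_const. apply ex_RInt_cont; auto. intros; auto. }
  assert (0 <= RInt f (x + dl) (/2)).
  { rewrite <- (Rmult_0_r (/2 - (x + dl))), <- RInt_const'. apply RInt_le. unfold dl; lra.
    apply ex_RInt_const. apply ex_RInt_cont; auto. intros; auto. }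
  lra.
Qed.

Lemma sin_ge_third : forall u, 0 <= u <= 2 -> u / 3 <= sin u.
Proof.
  intros u [H1 H2]. pose proof PI_ge_3 as Hpi.
  pose proof (sin_bound u 0 H1 ltac:(lra)) as [Hs _]. unfold sin_approx, sin_term in Hs. simpl in Hs.
  assert (u * u <= 4) by nra. nra.
Qed.

Lemma g_lower : forall y, Rabs y <= /2 -> 2 * y ^ 2 <= g y.
Proof.
  intros y Hy. pose proof PI_ge_3 as Hpi. pose proof PI_4.
  unfold g. replace (2 * PI * y) with (2 * (PI * y)) by ring. rewrite cos_2a_sin.
  assert (Hs : Rabs y <= sin (PI * Rabs y)).
  { pose proof (Rabs_pos y).
    assert (PI * Rabs y <= 2). { apply Rle_trans with (4 * /2). apply Rmult_le_compat; lra. lra. }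
    pose proof (sin_ge_third (PI * Rabs y) ltac:(split; [apply Rmult_le_pos; lra| lra])).
    assert (Rabs y <= PI * Rabs y / 3) by nra. lra. }
  assert (E : sin (PI * y) * sin (PI * y) = sin (PI * Rabs y) * sin (PI * Rabs y)).
  { unfold Rabs. destruct Rcase_abs. replace (PI * - y) with (- (PI * y)) by ring. rewrite sin_neg. ring. auto. }
  replace (1 - (1 - 2 * sin (PI * y) * sin (PI * y))) with (2 * (sin (PI * y) * sin (PI * y))) by ring. rewrite E. pose proof (Rabs_pos y).
  assert (y ^ 2 = Rabs y * Rabs y) by (rewrite <- Rabs_mult; simpl; rewrite Rmult_1_r; rewrite Rabs_right; nra).
  nra.
Qed.

Lemma edisp_S : forall k p, edisp (S k) p = edisp k p + g (p k).
Proof. reflexivity. Qed.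

Lemma e_lower0 : forall d p, (forall j, (j < d)%nat -> Rabs (p j) <= /2) -> 2 * sqdist d p (fun _ => 0) <= edisp d p.
Proof.
  induction d as [|d IH]; intros p Hp; simpl. lra.
  fold (g (p d)). pose proof (IH p (fun j Hj => Hp j ltac:(lia))). pose proof (g_lower (p d) (Hp d ltac:(lia))).
  rewrite Rminus_0_r. lra.
Qed.

Lemma e_lowerv : forall d p v, (forall j, (j < d)%nat -> 2 * (p j - v j) ^ 2 <= 2 - g (p j)) ->
  2 * sqdist d p v <= 2 * INR d - edisp d p.
Proof.
  induction d as [|d IH]; intros p v Hp. simpl. lra.
  change (sqdist (S d) p v) with (sqdist d p v + (p d - v d) ^ 2).
  change (edisp (S d) p) with (edisp d p + g (p d)). rewrite S_INR.
  pose proof (IH p v (fun j Hj => Hp j ltac:(lia))). pose proof (Hp d ltac:(lia)).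
  lra.
Qed.

Lemma vert_coord : forall y v, Rabs y <= /2 -> v = (if Rle_dec 0 y then /2 else -/2) ->
  2 * (y - v) ^ 2 <= 2 - g y.
Proof.
  intros y v Hy Hv.
  assert (E : 2 - g y = g (y - v)).
  { unfold g. destruct (Rle_dec 0 y); subst v.
    - replace (2 * PI * (y - /2)) with (2 * PI * y - PI) by field.
      rewrite cos_minus, cos_PI, sin_PI. ring.
    - replace (2 * PI * (y - -/2)) with (2 * PI * y + PI) by field.
      rewrite cos_plus, cos_PI, sin_PI. ring. }
  rewrite E. apply g_lower. destruct (Rle_dec 0 y); subst v; unfold Rabs in *; destruct Rcase_abs; destruct Rcase_abs; lra.
Qed.

Lemma blists_in : forall n (b : list bool), length b = n -> In b (blists n).
Proof.
  induction n as [|n IH]; intros b Hb.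
  - destruct b; simpl in *; [left; auto | lia].
  - destruct b as [|x l]; simpl in Hb. lia.
    simpl. apply in_flat_map. exists l. split. apply IH; lia.
    destruct x; simpl; auto.
Qed.

Lemma fold_min_le : forall (L : list R) base x, In x L -> fold_right Rmin base L <= x.
Proof.
  induction L as [|a L IH]; intros base x Hx; simpl in *. contradiction.
  destruct Hx as [Hx|Hx]. subst; apply Rmin_l. eapply Rle_trans. apply Rmin_r. apply IH; auto.
Qed.

Lemma fold_min_base : forall (L : list R) base, fold_right Rmin base L <= base.
Proof. induction L; intros; simpl. lra. eapply Rle_trans. apply Rmin_r. auto. Qed.

Lemma fold_min_ge : forall (L : list R) base m, m <= base -> (forall x, In x L -> m <= x) -> m <= fold_right Rmin base L.
Proof.
  induction L as [|a L IH]; intros base m Hb Hx; simpl. auto.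
  apply Rmin_glb. apply Hx; left; auto. apply IH; auto. intros; apply Hx; right; auto.
Qed.

Lemma Ddist_nonneg : forall d p, 0 <= Ddist d p.
Proof.
  intros. unfold Ddist. apply fold_min_ge. unfold Defs.dist; apply sqrt_pos.
  intros x Hx. apply in_map_iff in Hx. destruct Hx as [b [Hb _]]. subst. unfold Defs.dist; apply sqrt_pos.
Qed.

Lemma sq_of_le_sqrt : forall D a, 0 <= D -> D <= sqrt a -> 0 <= a -> D ^ 2 <= a.
Proof.
  intros. rewrite <- (sqrt_sqrt a) by auto. simpl. rewrite Rmult_1_r. apply Rmult_le_compat; auto.
Qed.

Lemma sqdist_nonneg : forall d p v, 0 <= sqdist d p v.
Proof. induction d; intros; simpl. lra. pose proof (IHd p v). pose proof (pow2_ge_0 (p d - v d)). lra. Qed.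

Lemma nth_map_seq : forall (f : nat -> bool) d j, (j < d)%nat -> nth j (map f (seq 0 d)) false = f j.
Proof.
  intros. rewrite nth_indep with (d' := f 0%nat) by (rewrite length_map, length_seq; auto).
  rewrite map_nth, seq_nth by auto. reflexivity.
Qed.

Lemma D_bounds : forall d p, in_torus d p ->
  2 * Ddist d p ^ 2 <= edisp d p /\ 2 * Ddist d p ^ 2 <= 2 * INR d - edisp d p.
Proof.
  intros d p Hp. pose proof (Ddist_nonneg d p) as HD.
  assert (Hp' : forall j, (j < d)%nat -> Rabs (p j) <= /2) by (intros j Hj; apply Rabs_le; apply Hp; auto).
  split.
  - pose proof (e_lower0 d p Hp').
    assert (Ddist d p <= Defs.dist d p (fun _ => 0)) by apply fold_min_base.
    pose proof (sq_of_le_sqrt _ _ HD H0 (sqdist_nonneg _ _ _)). lra.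
  - set (b := map (fun j => if Rle_dec 0 (p j) then true else false) (seq 0 d)).
    assert (Hb : In b (blists d)) by (apply blists_in; unfold b; rewrite length_map, length_seq; auto).
    assert (Hv : forall j, (j < d)%nat -> vertex b j = if Rle_dec 0 (p j) then /2 else -/2).
    { intros j Hj. unfold vertex, b. rewrite nth_map_seq by auto.
      destruct (Rle_dec 0 (p j)); auto. }
    pose proof (e_lowerv d p (vertex b) (fun j Hj => vert_coord (p j) (vertex b j) (Hp' j Hj) (Hv j Hj))).
    assert (Ddist d p <= Defs.dist d p (vertex b)).
    { unfold Ddist. apply fold_min_le. apply in_map_iff. exists b; auto. }
    pose proof (sq_of_le_sqrt _ _ HD H0 (sqdist_nonneg _ _ _)). lra.
Qed.

Lemma exp_lip : forall R0 a b, Rabs a <= R0 -> Rabs b <= R0 -> Rabs (exp a - exp b) <= exp R0 * Rabs (a - b).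
Proof.
  intros R0 a b Ha Hb.
  destruct (MVT_gen exp b a exp) as [c [Hc Heq]].
  - intros; apply is_derive_exp.
  - intros x _. apply continuity_pt_filterlim. apply (ex_derive_continuous (K:=R_AbsRing) (V:=R_NormedModule)).
    eexists; apply is_derive_exp.
  - rewrite Heq, Rabs_mult. apply Rmult_le_compat_r. apply Rabs_pos.
    rewrite Rabs_right by (apply Rle_ge, Rlt_le, exp_pos). 
    assert (Hc2 : c <= R0).
    { destruct Hc as [_ Hc]. eapply Rle_trans. apply Hc. apply Rmax_lub; eapply Rle_trans; try apply Rle_abs; auto. }
    destruct (Rle_lt_or_eq_dec c R0 Hc2) as [H|H].
    + apply Rlt_le, exp_increasing; auto.
    + rewrite H; lra.
Qed.

Lemma LLip_lin : forall H1 H2 a b, LLip H1 -> LLip H2 -> LLip (fun y e => a * H1 y e + b * H2 y e).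
Proof.
  intros H1 H2 a b L1 L2 r Hr. destruct (L1 r Hr) as [K1 [HK1 Hl1]]. destruct (L2 r Hr) as [K2 [HK2 Hl2]].
  exists (Rabs a * K1 + Rabs b * K2). split. pose proof (Rabs_pos a); pose proof (Rabs_pos b); nra.
  intros. replace (a * H1 y e + b * H2 y e - (a * H1 y' e' + b * H2 y' e')) with
    (a * (H1 y e - H1 y' e') + b * (H2 y e - H2 y' e')) by ring.
  eapply Rle_trans. apply Rabs_triang. rewrite !Rabs_mult.
  pose proof (Hl1 y y' e e' H H0 H3 H4). pose proof (Hl2 y y' e e' H H0 H3 H4).
  pose proof (Rabs_pos a); pose proof (Rabs_pos b).
  apply Rle_trans with (Rabs a * (K1 * (Rabs (y - y') + Rabs (e - e'))) + Rabs b * (K2 * (Rabs (y - y') + Rabs (e - e')))).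
  apply Rplus_le_compat; apply Rmult_le_compat_l; auto. lra.
Qed.

Lemma LLip_glob1 : forall (f : R -> R) L, 0 <= L -> (forall a b, Rabs (f a - f b) <= L * Rabs (a - b)) ->
  LLip (fun _ e => f e).
Proof.
  intros f L HL Hf r Hr. exists L. split; auto. intros.
  eapply Rle_trans. apply Hf. apply Rmult_le_compat_l; auto. pose proof (Rabs_pos (y - y')); lra.
Qed.

Section TimeRep.
Variables (al eps phi : R).
Hypothesis Heps : 0 < eps.

Definition hq (a : R) : R := (eps * sin phi + a * cos phi) / (a ^ 2 + eps ^ 2).
Definition Hphi (e : R) : R := hq (al - e).
Definition H2f (t e : R) : R := exp (- eps * t) * sin (al * t + phi - t * e).
Definition H3f (t e : R) : R := sin (al * t + phi - t * e).

Lemma den_pos : forall a, 0 < a ^ 2 + eps ^ 2.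
Proof. intros. nra. Qed.

Lemma hq_lip : forall a b, Rabs (hq a - hq b) <= (2 / eps ^ 2) * Rabs (a - b).
Proof.
  apply lip_of_deriv with (df := fun a => (cos phi * (a ^ 2 + eps ^ 2) - 2 * a * (eps * sin phi + a * cos phi)) / (a ^ 2 + eps ^ 2) ^ 2).
  - intros a. unfold hq. pose proof (den_pos a). auto_derive. lra. field. lra.
  - intros a. pose proof (den_pos a).
    assert (Hn : Rabs (cos phi * (a ^ 2 + eps ^ 2) - 2 * a * (eps * sin phi + a * cos phi)) <= 2 * (a ^ 2 + eps ^ 2)).
    { replace (cos phi * (a ^ 2 + eps ^ 2) - 2 * a * (eps * sin phi + a * cos phi)) with
        (cos phi * (eps ^ 2 - a ^ 2) - (2 * a * eps) * sin phi) by ring.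
      eapply Rle_trans. apply Rabs_triang. rewrite Rabs_Ropp, (Rabs_mult (cos phi)), (Rabs_mult (2 * a * eps)).
      pose proof (COS_bound phi). pose proof (SIN_bound phi).
      assert (Rabs (cos phi) <= 1) by (apply Rabs_le; lra).
      assert (Rabs (sin phi) <= 1) by (apply Rabs_le; lra).
      assert (Rabs (eps ^ 2 - a ^ 2) <= a ^ 2 + eps ^ 2) by (apply Rabs_le; nra).
      assert (Rabs (2 * a * eps) <= a ^ 2 + eps ^ 2).
      { rewrite !Rabs_mult, (Rabs_right 2), (Rabs_right eps) by lra.
        pose proof (Rabs_pos a). assert (Rabs a * Rabs a = a ^ 2) by (rewrite <- Rabs_mult; simpl; rewrite Rmult_1_r; apply Rabs_right; nra).
        pose proof (pow2_ge_0 (Rabs a - eps)). nra. }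
      pose proof (Rabs_pos (cos phi)). pose proof (Rabs_pos (sin phi)).
      pose proof (Rabs_pos (eps ^ 2 - a ^ 2)). pose proof (Rabs_pos (2 * a * eps)). apply Rle_trans with (1 * (a ^ 2 + eps ^ 2) + (a ^ 2 + eps ^ 2) * 1). apply Rplus_le_compat; apply Rmult_le_compat; auto. lra. }
    unfold Rdiv. rewrite Rabs_mult, Rabs_inv, (Rabs_right ((a ^ 2 + eps ^ 2) ^ 2)) by (apply Rle_ge, pow_le; lra).
    apply Rle_trans with (2 * (a ^ 2 + eps ^ 2) * / (a ^ 2 + eps ^ 2) ^ 2).
    apply Rmult_le_compat_r. apply Rlt_le, Rinv_0_lt_compat, pow_lt; lra. auto.
    replace (2 * (a ^ 2 + eps ^ 2) * / (a ^ 2 + eps ^ 2) ^ 2) with (2 * / (a ^ 2 + eps ^ 2)) by (field; lra).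
    apply Rmult_le_compat_l. lra. apply Rinv_le_contravar. nra. nra.
Qed.

Lemma Hphi_LLip : LLip (fun _ e => Hphi e).
Proof.
  apply LLip_glob1 with (2 / eps ^ 2). apply Rlt_le, Rdiv_lt_0_compat; nra.
  intros a b. unfold Hphi. eapply Rle_trans. apply hq_lip.
  replace (al - a - (al - b)) with (- (a - b)) by ring. rewrite Rabs_Ropp. lra.
Qed.

Lemma H3f_LLip : LLip H3f.
Proof.
  intros r Hr. exists (Rabs al + 2 * r + 1). split. pose proof (Rabs_pos al); lra.
  intros y y' e e' Hy Hy' He He'. unfold H3f. eapply Rle_trans. apply sin_lip.
  replace (al * y + phi - y * e - (al * y' + phi - y' * e')) with
    (al * (y - y') - (y - y') * e - y' * (e - e')) by ring.
  eapply Rle_trans. apply Rabs_triang. eapply Rle_trans. apply Rplus_le_compat_r. apply Rabs_triang.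
  repeat (rewrite Rabs_Ropp || rewrite Rabs_mult).
  pose proof (Rabs_pos al). pose proof (Rabs_pos (y - y')). pose proof (Rabs_pos (e - e')).
  pose proof (Rabs_pos e). pose proof (Rabs_pos y').
  pose proof (Rmult_le_compat_l (Rabs (y - y')) _ _ H0 He). pose proof (Rmult_le_compat_r (Rabs (e - e')) _ _ H1 Hy'). nra.
Qed.

Lemma H2f_LLip : LLip H2f.
Proof.
  intros r Hr. destruct (H3f_LLip r Hr) as [L [HL Hl]].
  exists (exp (eps * r) * (eps + L)). split. pose proof (exp_pos (eps * r)); nra.
  intros y y' e e' Hy Hy' He He'. unfold H2f.
  fold (H3f y e) (H3f y' e').
  replace (exp (- eps * y) * H3f y e - exp (- eps * y') * H3f y' e') with
    ((exp (- eps * y) - exp (- eps * y')) * H3f y e + exp (- eps * y') * (H3f y e - H3f y' e')) by ring.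
  eapply Rle_trans. apply Rabs_triang. rewrite !Rabs_mult.
  assert (E1 : Rabs (exp (- eps * y) - exp (- eps * y')) <= exp (eps * r) * (eps * Rabs (y - y'))).
  { eapply Rle_trans. apply (exp_lip (eps * r)).
    1,2: rewrite Rabs_mult, Rabs_Ropp, (Rabs_right eps) by lra; apply Rmult_le_compat_l; lra.
    replace (- eps * y - - eps * y') with (- eps * (y - y')) by ring.
    rewrite Rabs_mult, Rabs_Ropp, (Rabs_right eps) by lra. lra. }
  assert (E2 : Rabs (H3f y e) <= 1) by (unfold H3f; apply Rabs_le; apply SIN_bound).
  assert (E3 : Rabs (exp (- eps * y')) <= exp (eps * r)).
  { rewrite Rabs_right by (apply Rle_ge, Rlt_le, exp_pos).
    destruct (Rle_lt_or_eq_dec (- eps * y') (eps * r)). 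
    assert (- eps * y' <= eps * r). { pose proof (Rle_abs (-y')). rewrite Rabs_Ropp in H. nra. } auto.
    apply Rlt_le, exp_increasing; auto. rewrite e0; lra. }
  pose proof (Hl y y' e e' Hy Hy' He He').
  pose proof (Rabs_pos (y - y')). pose proof (Rabs_pos (e - e')). pose proof (Rabs_pos (H3f y e)).
  pose proof (Rabs_pos (exp (- eps * y'))). pose proof (Rabs_pos (H3f y e - H3f y' e')). pose proof (exp_pos (eps * r)).
  apply Rle_trans with (exp (eps * r) * (eps * Rabs (y - y')) * 1 + exp (eps * r) * (L * (Rabs (y - y') + Rabs (e - e')))).
  apply Rplus_le_compat. apply Rmult_le_compat; try apply Rabs_pos; auto.
  apply Rmult_le_compat; try apply Rabs_pos; auto.
  rewrite Rmult_1_r.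
  assert (0 <= exp (eps * r) * eps * Rabs (e - e')) by (apply Rmult_le_pos; nra).
  replace (exp (eps * r) * (eps + L) * (Rabs (y - y') + Rabs (e - e'))) with
    (exp (eps * r) * (eps * Rabs (y - y')) + exp (eps * r) * (L * (Rabs (y - y') + Rabs (e - e'))) + exp (eps * r) * eps * Rabs (e - e')) by ring.
  lra.
Qed.

End TimeRep.

Section TR2.
Variables (al eps phi T : R).
Hypothesis Heps : 0 < eps.

Definition Fprim (e t : R) : R :=
  exp (- eps * t) * ((- eps / ((al - e) ^ 2 + eps ^ 2)) * sin ((al - e) * t + phi)
                     + (- (al - e) / ((al - e) ^ 2 + eps ^ 2)) * cos ((al - e) * t + phi)).
Definition FT (e : R) : R := Fprim e T.
Definition Iint (e : R) : R := RInt (fun t => H2f al eps phi t e) 0 T.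

Lemma Iint_eq : forall e, Iint e = Hphi al eps phi e + FT e.
Proof.
  intros e. unfold Iint.
  pose proof (den_pos eps Heps (al - e)).
  assert (Hd : forall t, is_derive (Fprim e) t (H2f al eps phi t e)).
  { intros t. unfold Fprim, H2f. auto_derive. repeat split; lra.
    replace (al * t + phi - t * e) with ((al - e) * t + phi) by ring. field. lra. }
  rewrite (is_RInt_unique _ _ _ _ (is_RInt_derive (V:=R_CompleteNormedModule) (Fprim e) (fun t => H2f al eps phi t e) 0 T
    (fun t _ => Hd t) (fun t _ => LLip_cont_x _ (H2f_LLip al eps phi Heps) t e))).
  unfold FT, Hphi, hq, Fprim. simpl. unfold minus, plus, opp; simpl.
  replace ((al - e) * 0 + phi) with phi by ring. rewrite Rmult_0_r, exp_0.
  field. lra.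
Qed.

Lemma FT_bound : forall e, Rabs (FT e) <= 2 * exp (- eps * T) / eps.
Proof.
  intros e. unfold FT, Fprim. set (a := al - e).
  pose proof (den_pos eps Heps a) as Hden.
  rewrite Rabs_mult, (Rabs_right (exp _)) by (apply Rle_ge, Rlt_le, exp_pos).
  replace (2 * exp (- eps * T) / eps) with (exp (- eps * T) * (/ eps * 1 + / eps * 1)) by (field; lra).
  apply Rmult_le_compat_l. apply Rlt_le, exp_pos.
  eapply Rle_trans. apply Rabs_triang. rewrite !Rabs_mult.
  pose proof (Rabs_pos (sin (a * T + phi))). pose proof (Rabs_pos (cos (a * T + phi))).
  assert (Rabs (sin (a * T + phi)) <= 1) by (apply Rabs_le, SIN_bound).
  assert (Rabs (cos (a * T + phi)) <= 1) by (apply Rabs_le, COS_bound).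
  assert (E1 : Rabs (- eps / (a ^ 2 + eps ^ 2)) = eps / (a ^ 2 + eps ^ 2)).
  { unfold Rdiv. rewrite Rabs_mult, Rabs_Ropp, Rabs_inv, (Rabs_right eps), (Rabs_right (a^2+eps^2)) by lra. auto. }
  assert (E2 : Rabs (- a / (a ^ 2 + eps ^ 2)) = Rabs a / (a ^ 2 + eps ^ 2)).
  { unfold Rdiv. rewrite Rabs_mult, Rabs_Ropp, Rabs_inv, (Rabs_right (a^2+eps^2)) by lra. auto. }
  rewrite E1, E2.
  assert (eps / (a ^ 2 + eps ^ 2) <= / eps).
  { apply Rmult_le_reg_r with (a ^ 2 + eps ^ 2); auto. unfold Rdiv. rewrite Rmult_assoc, Rinv_l by lra.
    apply Rmult_le_reg_l with eps; auto. field_simplify; nra. }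
  assert (Rabs a / (a ^ 2 + eps ^ 2) <= / eps).
  { apply Rmult_le_reg_r with (a ^ 2 + eps ^ 2); auto. unfold Rdiv. rewrite Rmult_assoc, Rinv_l by lra.
    apply Rmult_le_reg_l with eps; auto. field_simplify; try lra.
    pose proof (Rabs_pos a). assert (Rabs a * Rabs a = a ^ 2) by (rewrite <- Rabs_mult; simpl; rewrite Rmult_1_r; apply Rabs_right; nra).
    pose proof (pow2_ge_0 (Rabs a - eps)). nra. }
  assert (0 <= eps / (a ^ 2 + eps ^ 2)) by (apply Rlt_le, Rdiv_lt_0_compat; lra).
  assert (0 <= Rabs a / (a ^ 2 + eps ^ 2)) by (apply Rmult_le_pos; [apply Rabs_pos| apply Rlt_le, Rinv_0_lt_compat; lra]).
  apply Rplus_le_compat; apply Rmult_le_compat; auto.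
Qed.

Lemma FT_LLip : LLip (fun _ e => FT e).
Proof.
  replace (fun (_ : R) e => FT e) with (fun (_ : R) e => 1 * Iint e + (-1) * Hphi al eps phi e).
  2:{ apply functional_extensionality; intros; apply functional_extensionality; intros e.
      rewrite Iint_eq. ring. }
  apply LLip_lin. apply LLip_RInt_param. apply H2f_LLip; auto. apply Hphi_LLip; auto.
Qed.

Lemma Fk_timerep : forall d,
  Fk d (fun _ e => Hphi al eps phi e) 0 0 =
  RInt (fun t => exp (- eps * t) * Fk d (H3f al phi) t 0) 0 T - Fk d (fun _ e => FT e) 0 0.
Proof.
  intros d.
  replace (fun (_ : R) e => Hphi al eps phi e) with (fun (_ : R) e => 1 * Iint e + (-1) * FT e).
  2:{ apply functional_extensionality; intros; apply functional_extensionality; intros e.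
      rewrite Iint_eq. ring. }
  rewrite Fk_lin. 2: apply LLip_RInt_param, H2f_LLip; auto. 2: apply FT_LLip.
  unfold Iint. rewrite Fk_fubini by (apply H2f_LLip; auto).
  rewrite Rmult_1_l. unfold Rminus. f_equal. 2: ring.
  apply RInt_ext. intros t _.
  pose proof (Fk_lin d (H3f al phi) (fun _ _ => 0) (exp (- eps * t)) 0 (H3f_LLip al phi) (LLip_const 0) t 0) as E.
  rewrite Rmult_0_l, Rplus_0_r in E. rewrite <- E.
  unfold Fk, H2f, H3f. f_equal. apply functional_extensionality. intros q. ring.
Qed.

End TR2.

Lemma window_lb : forall (h : R -> R), LLip (fun _ e => h e) -> (forall e, 0 <= h e) ->
  forall x dl gm c1 rho m,
  -/2 <= x - dl -> x + dl <= /2 -> 0 < dl ->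
  (forall y, x - dl <= y <= x + dl -> Rabs (g y - g x) <= gm) ->
  (forall c, Rabs (c - c1) <= rho -> m <= Fk 1 (fun _ e => h e) 0 c) -> 0 <= m ->
  forall k c, Rabs (c + INR k * g x - c1) <= rho - INR k * gm ->
    (2 * dl) ^ k * m <= Fk (S k) (fun _ e => h e) 0 c.
Proof.
  intros h HL H0 x dl gm c1 rho m Hx1 Hx2 Hdl Hg Hin Hm.
  induction k as [|k IH]; intros c Hc.
  - simpl. rewrite Rmult_1_l. apply Hin. simpl in Hc. rewrite Rmult_0_l, Rplus_0_r in Hc. apply Rle_trans with (rho - 0 * gm); [auto|lra].
  - rewrite Fk_S.
    set (f := fun y => Fk (S k) (fun _ e => h e) 0 (g y + c)).
    assert (Hfc : forall y, continuous f y).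
    { intros y. destruct (LLip_slice _ (Fk_LLip (S k) _ HL) 0 c) as [L HLs]. apply lip_cont with L. apply HLs. }
    assert (Hf0 : forall y, 0 <= f y).
    { intros. unfold f. apply Rle_trans with (Fk (S k) (fun _ _ => 0) 0 (g y + c)). rewrite Fk_const; lra. apply Fk_le; auto. apply LLip_const. }
    change (RInt (fun x0 => Fk (S k) (fun _ e => h e) 0 (g x0 + c)) (-/2) (/2)) with (RInt f (-/2) (/2)).
    rewrite (chasles' f (-/2) (x - dl) (/2)) by auto.
    rewrite (chasles' f (x - dl) (x + dl) (/2)) by auto.
    assert (A1 : 0 <= RInt f (-/2) (x - dl)).
    { rewrite <- (Rmult_0_r (x - dl - - / 2)), <- RInt_const'. apply RInt_le. lra.
      apply ex_RInt_const. apply ex_RInt_cont; auto. intros; auto. }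
    assert (A3 : 0 <= RInt f (x + dl) (/2)).
    { rewrite <- (Rmult_0_r (/2 - (x + dl))), <- RInt_const'. apply RInt_le. lra.
      apply ex_RInt_const. apply ex_RInt_cont; auto. intros; auto. }
    assert (A2 : (2 * dl) ^ S k * m <= RInt f (x - dl) (x + dl)).
    { replace ((2 * dl) ^ S k * m) with ((x + dl - (x - dl)) * ((2 * dl) ^ k * m)) by (simpl; ring).
      rewrite <- RInt_const'. apply RInt_le. lra. apply ex_RInt_const. apply ex_RInt_cont; auto.
      intros y Hy. unfold f. apply IH.
      pose proof (Hg y ltac:(lra)).
      rewrite S_INR in Hc.
      replace (g y + c + INR k * g x - c1) with ((c + (INR k + 1) * g x - c1) + (g y - g x)) by ring.
      eapply Rle_trans. apply Rabs_triang. lra. }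
    lra.
Qed.

Lemma pow_div : forall a b n, b <> 0 -> (a / b) ^ n = a ^ n / b ^ n.
Proof. intros. unfold Rdiv. rewrite Rpow_mult_distr, pow_inv. auto. Qed.

Lemma Im_lb : forall k eps al x s, (1 <= k)%nat -> 0 < eps -> 0 < s -> 0 <= x -> x + s / (4 * PI) <= /2 ->
  sin (2 * PI * x) = s -> al = INR (S k) * g x -> eps <= s ^ 2 / 8 ->
  s ^ (k - 1) / (6 * (12 * PI * INR k) ^ k) <=
    Fk (S k) (fun _ e => eps / ((al - e) ^ 2 + eps ^ 2)) 0 0.
Proof.
  intros k eps al x s Hk He Hs Hx Hxd Hsx Hal Hes.
  pose proof PI_RGT_0 as Hpi. pose proof PI_ge_3.
  assert (Hkr : 1 <= INR k) by (apply (le_INR 1); lia).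
  set (h := fun e => eps / ((al - e) ^ 2 + eps ^ 2)).
  assert (HL : LLip (fun _ e => h e)).
  { intros r Hr. destruct (Hphi_LLip al eps (PI/2) He r Hr) as [L [HL0 Hl]]. exists L. split; auto.
    intros. unfold h. pose proof (Hl y y' e e' H0 H1 H2 H3). unfold Hphi, hq in H4.
    rewrite sin_PI2, cos_PI2 in H4. rewrite !Rmult_1_r, !Rmult_0_r, !Rplus_0_r in H4. auto. }
  assert (Hh0 : forall e, 0 <= h e).
  { intros. unfold h. apply Rlt_le, Rdiv_lt_0_compat; auto. apply dpos; auto. }
  set (dl := s / (24 * PI * INR k)).
  assert (Hdl : 0 < dl) by (unfold dl; apply Rdiv_lt_0_compat; nra).
  assert (Hdl4 : dl <= s / (4 * PI)).
  { unfold dl. unfold Rdiv. apply Rmult_le_compat_l. lra. apply Rinv_le_contravar; nra. }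
  assert (Hs1 : s <= 1) by (rewrite <- Hsx; apply SIN_bound).
  set (gm := 3 * PI * s * dl).
  assert (Hgw : forall y, x - dl <= y <= x + dl -> Rabs (g y - g x) <= gm).
  { intros y Hy. destruct (g_mvt x y) as [c [Hc Heq]]. rewrite Heq.
    assert (Rabs (c - x) <= dl).
    { apply Rabs_le. unfold Rmin, Rmax in Hc. destruct Rle_dec; lra. }
    assert (Rabs (y - x) <= dl) by (apply Rabs_le; lra).
    pose proof (sin2_near x c). rewrite Hsx in H2.
    assert (2 * PI * Rabs (c - x) <= s / 2).
    { apply Rle_trans with (2 * PI * (s / (4 * PI))). apply Rmult_le_compat_l; lra. right; field; lra. }
    apply abs_elim in H2.
    rewrite Rabs_mult. unfold gm.
    apply Rmult_le_compat. apply Rabs_pos. apply Rabs_pos.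
    rewrite Rabs_mult, (Rabs_right (2 * PI)) by lra.
    replace (3 * PI * s) with (2 * PI * (3 * s / 2)) by field. apply Rmult_le_compat_l. lra.
    apply Rabs_le. lra. auto. }
  assert (Hin : forall c, Rabs (c - INR k * g x) <= s ^ 2 / 8 -> / (6 * s) <= Fk 1 (fun _ e => h e) 0 c).
  { intros c Hc. rewrite Fk_S.
    rewrite (RInt_ext _ (fun y => eps / (((al - c) - g y) ^ 2 + eps ^ 2))).
    2:{ intros y _. rewrite Fk_0. unfold h. f_equal. f_equal. f_equal. ring. }
    apply inner1D with x; auto.
    rewrite Hal, S_INR. replace ((INR k + 1) * g x - c - g x) with (- (c - INR k * g x)) by ring.
    rewrite Rabs_Ropp. auto. }
  pose proof (window_lb h HL Hh0 x dl gm (INR k * g x) (s ^ 2 / 8) (/ (6 * s))) as W.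
  assert (Wres : (2 * dl) ^ k * / (6 * s) <= Fk (S k) (fun _ e => h e) 0 0).
  { assert (s / (4 * PI) <= /2). { apply Rmult_le_reg_r with (4 * PI). lra. unfold Rdiv. rewrite Rmult_assoc, Rinv_l by lra. nra. }
    apply W.
    - lra.
    - lra.
    - lra.
    - exact Hgw.
    - exact Hin.
    - apply Rlt_le, Rinv_0_lt_compat; lra.
    - rewrite Rplus_0_l, Rminus_diag, Rabs_R0. unfold gm, dl. right. field. lra. }
  eapply Rle_trans. 2: apply Wres.
  right. unfold dl. replace (2 * (s / (24 * PI * INR k))) with (s / (12 * PI * INR k)) by (field; lra).
  rewrite pow_div by nra.
  assert (Hsk : s ^ k = s * s ^ (k - 1)) by (replace k with (S (k - 1)) at 1 by lia; reflexivity).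
  rewrite Hsk. assert (0 < 12 * PI * INR k) by nra.
  pose proof (pow_lt _ k H0). field. lra.
Qed.

Lemma lim_phi : forall d al phi, (3 <= d)%nat ->
  exists L, filterlim (fun eps => Fk d (fun _ e => Hphi al eps phi e) 0 0) (at_right 0) (locally L).
Proof.
  intros d al phi Hd.
  apply limit_abstract with (S := fun t => Fk d (H3f al phi) t 0) (K := Kd d).
  - unfold Kd. apply Rmult_le_pos; apply pow_le; lra.
  - intros t. apply LLip_cont_x. apply Fk_LLip. apply H3f_LLip.
  - intros t. apply Fk_bound. apply H3f_LLip. intros; unfold H3f; apply Rabs_le, SIN_bound.
  - intros t Ht. destruct (Fk_trig_decay d t (al * t + phi) Hd Ht) as [A _]. exact A.
  - intros e T He HT. rewrite (Fk_timerep al e phi T He d).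
    replace (RInt (fun t => exp (- e * t) * Fk d (H3f al phi) t 0) 0 T - Fk d (fun _ e0 => FT al e phi T e0) 0 0 -
      RInt (fun t => exp (- e * t) * Fk d (H3f al phi) t 0) 0 T) with (- Fk d (fun _ e0 => FT al e phi T e0) 0 0) by ring.
    rewrite Rabs_Ropp. apply Fk_bound. apply FT_LLip; auto. intros; apply FT_bound; auto.
Qed.

Lemma re_as_Fk : forall d al eps, fst (Theta_eps d al eps) = Fk d (fun _ e => Hphi al eps 0 e) 0 0.
Proof.
  intros. unfold Theta_eps, cint, Fk. simpl. f_equal. apply functional_extensionality. intros q.
  unfold Hphi, hq, Cinv, Re. simpl. rewrite sin_0, cos_0, Rplus_0_r.
  unfold Rdiv. f_equal. ring.
Qed.

Lemma im_as_Fk : forall d al eps, snd (Theta_eps d al eps) = Fk d (fun _ e => Hphi al eps (- (PI / 2)) e) 0 0.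
Proof.
  intros. unfold Theta_eps, cint, Fk. simpl. f_equal. apply functional_extensionality. intros q.
  unfold Hphi, hq, Cinv, Im. simpl. rewrite sin_neg, cos_neg, sin_PI2, cos_PI2, Rplus_0_r.
  unfold Rdiv. f_equal. ring.
Qed.

Lemma im_neg : forall d al eps, 0 < eps ->
  Fk d (fun _ e => Hphi al eps (- (PI / 2)) e) 0 0 = - Fk d (fun _ e => eps / ((al - e) ^ 2 + eps ^ 2)) 0 0.
Proof.
  intros d al eps He.
  assert (HL : LLip (fun _ e => eps / ((al - e) ^ 2 + eps ^ 2))).
  { intros r Hr. destruct (Hphi_LLip al eps (PI/2) He r Hr) as [L [HL0 Hl]]. exists L. split; auto.
    intros. pose proof (Hl y y' e e' H H0 H1 H2). unfold Hphi, hq in H3.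
    rewrite sin_PI2, cos_PI2 in H3. rewrite !Rmult_1_r, !Rmult_0_r, !Rplus_0_r in H3. auto. }
  pose proof (Fk_lin d (fun _ e => eps / ((al - e) ^ 2 + eps ^ 2)) (fun _ _ => 0) (-1) 0 HL (LLip_const 0) 0 0) as E.
  rewrite Rmult_0_l, Rplus_0_r in E. replace (- Fk d (fun _ e => eps / ((al - e) ^ 2 + eps ^ 2)) 0 0) with
    (-1 * Fk d (fun _ e => eps / ((al - e) ^ 2 + eps ^ 2)) 0 0) by ring. rewrite <- E.
  unfold Fk. f_equal. apply functional_extensionality. intros q.
  unfold Hphi, hq. rewrite sin_neg, cos_neg, sin_PI2, cos_PI2. field. apply Rgt_not_eq. apply dpos; auto.
Qed.

Lemma lim_le : forall (f : R -> R) L M dl, 0 < dl -> filterlim f (at_right 0) (locally L) ->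
  (forall e, 0 < e < dl -> f e <= M) -> L <= M.
Proof.
  intros f L M dl Hdl Hf Hb.
  destruct (Rle_or_lt L M) as [H|H]; auto. exfalso.
  assert (He : 0 < (L - M) / 2) by lra.
  pose proof (proj1 (filterlim_locally f L) Hf (mkposreal _ He)) as HF.
  assert (HD : at_right 0 (fun e => 0 < e < dl)).
  { exists (mkposreal dl Hdl). intros y Hy Hy0. simpl in Hy. unfold ball in Hy; simpl in Hy.
    unfold AbsRing_ball, abs, minus, plus, opp in Hy; simpl in Hy. rewrite Ropp_0, Rplus_0_r in Hy.
    split; auto. apply Rabs_def2 in Hy. lra. }
  destruct (filter_ex _ (filter_and _ _ HF HD)) as [e [He1 He2]].
  simpl in He1. unfold ball in He1; simpl in He1. unfold AbsRing_ball, abs, minus, plus, opp in He1; simpl in He1.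
  apply Rabs_def2 in He1. pose proof (Hb e He2). lra.
Qed.

Lemma hL_LLip : forall al eps, 0 < eps -> LLip (fun _ e => eps / ((al - e) ^ 2 + eps ^ 2)).
Proof.
  intros al eps He r Hr. destruct (Hphi_LLip al eps (PI/2) He r Hr) as [L [HL0 Hl]]. exists L. split; auto.
  intros. pose proof (Hl y y' e e' H H0 H1 H2). unfold Hphi, hq in H3.
  rewrite sin_PI2, cos_PI2 in H3. rewrite !Rmult_1_r, !Rmult_0_r, !Rplus_0_r in H3. auto.
Qed.

Lemma diag_point : forall d al, (1 <= d)%nat -> 0 <= al <= 2 * INR d ->
  exists x, 0 <= x <= /2 /\ g x = al / INR d.
Proof.
  intros d al Hd Hal.
  assert (Hdr : 1 <= INR d) by (apply (le_INR 1); lia).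
  assert (Hc : continuity g) by (intros x; apply continuity_pt_filterlim, g_cont).
  assert (g0 : g 0 = 0) by (unfold g; rewrite Rmult_0_r, cos_0; ring).
  assert (g1 : g (/2) = 2) by (unfold g; replace (2 * PI * /2) with PI by field; rewrite cos_PI; ring).
  destruct (IVT_gen g 0 (/2) (al / INR d) Hc) as [x [Hx Hgx]].
  - rewrite g0, g1, Rmin_left, Rmax_right by lra. split.
    apply Rmult_le_pos; [lra | apply Rlt_le, Rinv_0_lt_compat; lra].
    apply Rmult_le_reg_r with (INR d). lra. unfold Rdiv. rewrite Rmult_assoc, Rinv_l by lra. lra.
  - exists x. rewrite Rmin_left, Rmax_right in Hx by lra. auto.
Qed.

Theorem corollary3p2 (d : nat) (hd : (3 <= d)%nat) :
  exists c3 : R, 0 < c3 /\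
    forall (lam : R) (p : nat -> R), 0 < lam -> in_torus d p ->
      exists w : C, is_omega d lam p w /\
        Im w <= - c3 * lam ^ 2 * (Ddist d p) ^ (d - 2).
Proof.
  pose proof PI_RGT_0 as Hpi.
  set (k := (d - 1)%nat).
  assert (Hk : (1 <= k)%nat) by (unfold k; lia).
  assert (Hkr : 1 <= INR k) by (apply (le_INR 1); lia).
  assert (Hdr : 3 <= INR d) by (replace 3 with (INR 3) by (simpl; ring); apply le_INR; lia).
  set (cd := / (6 * (12 * PI * INR k) ^ k)).
  assert (Hcd : 0 < cd) by (apply Rinv_0_lt_compat, Rmult_lt_0_compat; [lra| apply pow_lt; nra]).
  exists (cd / INR d ^ (d - 2)). split.
  { apply Rdiv_lt_0_compat; auto. apply pow_lt; lra. }
  intros lam p Hlam Hp.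
  set (al := edisp d p).
  destruct (lim_phi d al 0 hd) as [L1 H1].
  destruct (lim_phi d al (- (PI / 2)) hd) as [L2 H2].
  exists (Cplus (RtoC al) (Cmult (RtoC (lam ^ 2)) (L1, L2))).
  split.
  { exists (L1, L2). split; auto.
    unfold is_Theta. apply filterlim_locally. intros eps.
    pose proof (proj1 (filterlim_locally _ _) H1 eps) as F1.
    pose proof (proj1 (filterlim_locally _ _) H2 eps) as F2.
    eapply filter_imp. 2: apply (filter_and _ _ F1 F2).
    intros e [B1 B2]. split.
    - simpl. rewrite <- re_as_Fk in B1. exact B1.
    - simpl. rewrite <- im_as_Fk in B2. exact B2. }
  assert (EIm : Im (Cplus (RtoC al) (Cmult (RtoC (lam ^ 2)) (L1, L2))) = lam ^ 2 * L2).
  { unfold Cplus, Cmult, RtoC, Im. simpl. ring. }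
  rewrite EIm.
  assert (HL2neg : L2 <= 0).
  { apply (lim_le _ L2 0 1 ltac:(lra) H2). intros e He.
    rewrite im_neg by lra.
    assert (0 <= Fk d (fun _ e0 => e / ((al - e0) ^ 2 + e ^ 2)) 0 0).
    { apply Rle_trans with (Fk d (fun _ _ => 0) 0 0). rewrite Fk_const; lra.
      apply Fk_le. apply LLip_const. apply hL_LLip; lra.
      intros. apply Rlt_le, Rdiv_lt_0_compat. lra. apply dpos; lra. }
    lra. }
  pose proof (edisp_range d p) as Hrange. fold al in Hrange.
  destruct (diag_point d al ltac:(lia) Hrange) as [x [Hx Hgx]].
  set (s := sin (2 * PI * x)).
  assert (Hs0 : 0 <= s) by (apply sin_ge_0; nra).
  pose proof (Ddist_nonneg d p) as HD0.
  assert (HDs : Ddist d p <= INR d * s).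
  { destruct (D_bounds d p Hp) as [B1 B2]. fold al in B1, B2.
    assert (Hcos : cos (2 * PI * x) = 1 - al / INR d) by (unfold g in Hgx; lra).
    assert (Hs2 : s ^ 2 = 1 - (1 - al / INR d) ^ 2).
    { rewrite <- Hcos. unfold s. pose proof (sin2_cos2 (2 * PI * x)). unfold Rsqr in H. simpl. lra. }
    assert (E : (INR d * s) ^ 2 = al * (2 * INR d - al)).
    { rewrite Rpow_mult_distr, Hs2. field. lra. }
    assert (Ddist d p ^ 2 <= al * (2 * INR d - al)).
    { destruct (Rle_or_lt (INR d) al).
      - apply Rle_trans with (1 * (2 * INR d - al)). lra. apply Rmult_le_compat_r; lra.
      - apply Rle_trans with (al * 1). lra. apply Rmult_le_compat_l; lra. }
    rewrite <- E in H.
    destruct (Rle_or_lt (Ddist d p) (INR d * s)); auto.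
    assert (0 <= INR d * s) by (apply Rmult_le_pos; lra). nra. }
  assert (Hd2 : (d - 2)%nat = (k - 1)%nat) by (unfold k; lia).
  destruct (Req_dec s 0) as [Hs|Hs].
  -
    rewrite Hs, Rmult_0_r in HDs.
    assert (Ddist d p = 0) by lra. rewrite H.
    rewrite pow_i by lia. rewrite Rmult_0_r.
    assert (0 <= lam ^ 2) by (apply pow_le; lra). nra.
  - assert (Hsp : 0 < s) by lra.
    assert (HL2 : L2 <= - (s ^ (k - 1) * cd)).
    { apply (lim_le _ L2 _ (s ^ 2 / 8) ltac:(apply Rdiv_lt_0_compat; [apply pow_lt|]; lra) H2).
      intros e He. rewrite im_neg by lra.
      assert (s ^ (k - 1) / (6 * (12 * PI * INR k) ^ k) <= Fk (S k) (fun _ e0 => e / ((al - e0) ^ 2 + e ^ 2)) 0 0).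
      { apply (Im_lb k e al x s Hk ltac:(lra) Hsp ltac:(lra)).
        - assert (s <= PI - 2 * PI * x).
          { unfold s. rewrite <- sin_PI_x. apply sin_le_id. nra. }
          apply Rmult_le_reg_r with (4 * PI). lra.
          replace ((x + s / (4 * PI)) * (4 * PI)) with (4 * PI * x + s) by (field; lra). nra.
        - reflexivity.
        - replace (INR (S k)) with (INR d) by (f_equal; unfold k; lia). rewrite Hgx. field. lra.
        - lra. }
      replace (S k) with d in H by (unfold k; lia). unfold Rdiv in H. fold cd in H. lra. }
    assert (Hpow : (Ddist d p / INR d) ^ (d - 2) <= s ^ (k - 1)).
    { rewrite Hd2. apply pow_incr. split. apply Rmult_le_pos; auto. apply Rlt_le, Rinv_0_lt_compat; lra.
      apply Rmult_le_reg_r with (INR d). lra. unfold Rdiv. rewrite Rmult_assoc, Rinv_l by lra. lra. }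
    rewrite pow_div in Hpow by lra.
    assert (0 < INR d ^ (d - 2)) by (apply pow_lt; lra).
    assert (0 < lam ^ 2) by (apply pow_lt; lra).
    assert (Hfin : cd / INR d ^ (d - 2) * Ddist d p ^ (d - 2) <= cd * s ^ (k - 1)).
    { replace (cd / INR d ^ (d - 2) * Ddist d p ^ (d - 2)) with (cd * (Ddist d p ^ (d - 2) / INR d ^ (d - 2))) by (field; lra).
      apply Rmult_le_compat_l; lra. }
    replace (- (cd / INR d ^ (d - 2)) * lam ^ 2 * Ddist d p ^ (d - 2)) with
      (- (lam ^ 2 * (cd / INR d ^ (d - 2) * Ddist d p ^ (d - 2)))) by ring.
    apply Rle_trans with (lam ^ 2 * (- (s ^ (k - 1) * cd))). apply Rmult_le_compat_l; lra.
    nra.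
Qed.
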